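(* Let $\mathsf{P}$ and $\mathsf{Q}$ be $\Pi^1_2$ principles such that both $\mathsf{P}$ and $\mathsf{Q}$ are total and $\mathsf{P}$ has finite tolerance. Then: (1) if $\langle \mathsf{Q},\mathsf{P}\rangle \leq_{\mathrm{sW}} \mathsf{P}$, then $\mathsf{Q}^{\omega} \leq_{\mathrm{sW}} \mathsf{P}$; (2) if $\langle \mathsf{Q},\mathsf{P}\rangle \leq_{\mathrm{W}} \mathsf{P}$, then $\mathsf{Q}^{\omega} \leq_{\mathrm{W}} \mathsf{P}$.
   Context: A $\Pi^1_2$ principle $\mathsf{P}$ (a statement $(\forall X)(\exists Y)\varphi(X,Y)$ with $\varphi$ arithmetical) is viewed as a problem: its instances are the sets $X$ in its domain and the solutions to $X$ are the $Y$ with $\varphi(X,Y)$. Subsets of $\omega$ are identified with elements of $2^\omega$. For $\Pi^1_2$ principles $\mathsf{P},\mathsf{Q}$: $\mathsf{P}\leq_{\mathrm{W}}\mathsf{Q}$ (Weihrauch reducible) if there are Turing functionals $\Phi,\Psi$ such that for every instance $A$ of $\mathsf{P}$, $\Phi(A)$ is an instance of $\mathsf{Q}$, and for every solution $T$ to $\Phi(A)$, $\Psi(A\oplus T)$ is a solution to $A$; $\mathsf{P}\leq_{\mathrm{sW}}\mathsf{Q}$ (strongly Weihrauch reducible) is the same but with $\Psi(T)$ in place of $\Psi(A\oplus T)$. The parallel product $\langle\mathsf{P},\mathsf{Q}\rangle$ has as instances pairs $\langle A,B\rangle$ with $A$ an instance of $\mathsf{P}$ and $B$ an instance of $\mathsf{Q}$,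 with solutions the pairs $\langle S,T\rangle$ where $S$ solves $A$ and $T$ solves $B$. $\mathsf{Q}^\omega$ has as instances sequences $\langle A_i : i\in\omega\rangle$ of instances of $\mathsf{Q}$ (coded as a single set), with solutions the sequences $\langle S_i:i\in\omega\rangle$ with each $S_i$ a solution to $A_i$. $\mathsf{P}$ is total if every element of $2^\omega$ is (codes) an instance of $\mathsf{P}$. $\mathsf{P}$ has finite tolerance if there is a Turing functional $\Theta$ such that whenever $B_1,B_2$ are instances of $\mathsf{P}$ with $B_1(x)=B_2(x)$ for all $x\geq m$, and $S_1$ is a solution to $B_1$, then $\Theta(S_1,m)$ is a solution to $B_2$. *)

(* Defs.v *)
From Stdlib Require Import Arith List Cantor.
Import ListNotations.

Definition cset := nat -> bool.

(* Oracle partial recursive functions (mu-recursive functions with an  *)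
(* oracle primitive).  A Turing functional is given by such a program. *)
Inductive prog : Type :=
| PZero
| PSucc
| PProj (i : nat)
| POracle
| PComp (f : prog) (gs : list prog)
| PPrimRec (f g : prog)
| PMu (f : prog).

Definition b2n (b : bool) : nat := if b then 1 else 0.

Inductive eval : prog -> cset -> list nat -> nat -> Prop :=
| ev_zero X xs : eval PZero X xs 0
| ev_succ X xs : eval PSucc X xs (S (nth 0 xs 0))
| ev_proj i X xs : eval (PProj i) X xs (nth i xs 0)
| ev_oracle X xs : eval POracle X xs (b2n (X (nth 0 xs 0)))
| ev_comp f gs X xs ys y :
    eval_list gs X xs ys -> eval f X ys y -> eval (PComp f gs) X xs y
| ev_prim0 f g X xs y :
    eval f X xs y -> eval (PPrimRec f g) X (0 :: xs) y
| ev_primS f g X k xs r y :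
    eval (PPrimRec f g) X (k :: xs) r -> eval g X (k :: r :: xs) y ->
    eval (PPrimRec f g) X (S k :: xs) y
| ev_mu f X xs n :
    eval f X (n :: xs) 0 ->
    (forall m, m < n -> exists k, eval f X (m :: xs) (S k)) ->
    eval (PMu f) X xs n
with eval_list : list prog -> cset -> list nat -> list nat -> Prop :=
| evl_nil X xs : eval_list [] X xs []
| evl_cons g gs X xs y ys :
    eval g X xs y -> eval_list gs X xs ys -> eval_list (g :: gs) X xs (y :: ys).

Definition computes (p : prog) (X Y : cset) : Prop :=
  forall n, eval p X [n] (b2n (Y n)).

Definition computes2 (p : prog) (X : cset) (m : nat) (Y : cset) : Prop :=
  forall n, eval p X [m; n] (b2n (Y n)).

Definition join (A B : cset) : cset :=
  fun n => if Nat.even n then A (Nat.div2 n) else B (Nat.div2 n).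
Definition left_part (Z : cset) : cset := fun k => Z (2 * k).
Definition right_part (Z : cset) : cset := fun k => Z (2 * k + 1).
Definition column (Z : cset) (i : nat) : cset := fun n => Z (Cantor.to_nat (i, n)).

(* Problems (Pi^1_2 principles viewed as problems). *)
Record problem : Type := Problem {
  instance : cset -> Prop;
  solution : cset -> cset -> Prop
}.

Definition total (P : problem) : Prop := forall X, instance P X.

(* Parallel product <P, Q>: instances <A,B> coded as A (+) B. *)
Definition parallel (P Q : problem) : problem := {|
  instance := fun Z => instance P (left_part Z) /\ instance Q (right_part Z);
  solution := fun Z W => solution P (left_part Z) (left_part W) /\
                         solution Q (right_part Z) (right_part W)
|}.

(* Q^omega: sequences of Q-instances coded as a single set via Cantor pairing. *)
Definition omega_power (Q : problem) : problem := {|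
  instance := fun Z => forall i, instance Q (column Z i);
  solution := fun Z W => forall i, solution Q (column Z i) (column W i)
|}.

Definition weihrauch_le (P Q : problem) : Prop :=
  exists Phi Psi : prog,
    forall A, instance P A ->
      (exists B, computes Phi A B /\ instance Q B) /\
      (forall B, computes Phi A B -> forall T, solution Q B T ->
         exists S, computes Psi (join A T) S /\ solution P A S).

Definition strong_weihrauch_le (P Q : problem) : Prop :=
  exists Phi Psi : prog,
    forall A, instance P A ->
      (exists B, computes Phi A B /\ instance Q B) /\
      (forall B, computes Phi A B -> forall T, solution Q B T ->
         exists S, computes Psi T S /\ solution P A S).

Definition finite_tolerance (P : problem) : Prop :=
  exists Theta : prog,
    forall B1 B2 m, instance P B1 -> instance P B2 ->
      (forall x, m <= x -> B1 x = B2 x) ->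
      forall S1, solution P B1 S1 ->
        exists S2, computes2 Theta S1 m S2 /\ solution P B2 S2.

(* Main.v *)
Require Import Defs.
From Stdlib Require Import Arith List Lia Cantor Classical ClassicalEpsilon FunctionalExtensionality.
Import ListNotations.

Section ProgInd.
Variable P : prog -> Prop.
Hypothesis H0 : P PZero.
Hypothesis HS : P PSucc.
Hypothesis HP : forall i, P (PProj i).
Hypothesis HO : P POracle.
Hypothesis HC : forall f gs, P f -> Forall P gs -> P (PComp f gs).
Hypothesis HR : forall f g, P f -> P g -> P (PPrimRec f g).
Hypothesis HM : forall f, P f -> P (PMu f).
Fixpoint prog_ind' (p : prog) : P p :=
  match p with
  | PZero => H0 | PSucc => HS | PProj i => HP i | POracle => HO
  | PComp f gs => HC f gs (prog_ind' f)
      ((fix go (l : list prog) : Forall P l :=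
          match l with [] => Forall_nil _ | g :: l' => Forall_cons _ (prog_ind' g) (go l') end) gs)
  | PPrimRec f g => HR f g (prog_ind' f) (prog_ind' g)
  | PMu f => HM f (prog_ind' f)
  end.
End ProgInd.

Lemma eval_det : forall p X xs y, eval p X xs y -> forall y', eval p X xs y' -> y = y'.
Proof.
  intro p; induction p using prog_ind'; intros X xs y E y' E'.
  - inversion E; inversion E'; subst; auto.
  - inversion E; inversion E'; subst; auto.
  - inversion E; inversion E'; subst; auto.
  - inversion E; inversion E'; subst; auto.
  - inversion E; subst. inversion E'; subst.
    assert (ys = ys0).
    { clear E E' H6 H8. revert ys ys0 H2 H3. induction H; intros ys ys0 A B.
      - inversion A; inversion B; subst; auto.
      - inversion A; inversion B; subst. f_equal; eauto. }
    subst; eauto.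
  - revert y y' E E'. induction xs as [|n xs']; intros y y' E E'; [inversion E|].
    revert y y' E E'. induction n; intros y y' E E'.
    + inversion E; inversion E'; subst; eauto.
    + inversion E; inversion E'; subst.
      assert (r = r0) by eauto. subst; eauto.
  - inversion E; inversion E'; subst.
    destruct (Nat.lt_trichotomy y y') as [Hl|[He|Hl]]; auto.
    + match goal with Hf : forall m, m < y' -> _ |- _ => destruct (Hf _ Hl) as [k Hk] end.
      match goal with Hz : eval p X (y :: xs) 0 |- _ => specialize (IHp _ _ _ Hz _ Hk) end. discriminate.
    + match goal with Hf : forall m, m < y -> _ |- _ => destruct (Hf _ Hl) as [k Hk] end.
      match goal with Hz : eval p X (y' :: xs) 0 |- _ => specialize (IHp _ _ _ Hz _ Hk) end. discriminate.
Qed.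

Lemma eval_eq p X xs y y' : eval p X xs y -> y = y' -> eval p X xs y'.
Proof. intros; subst; auto. Qed.

Definition one := PComp PSucc [PZero].
Definition predP := PPrimRec PZero (PProj 0).
Definition addP := PComp (PPrimRec (PProj 0) (PComp PSucc [PProj 1])) [PProj 1; PProj 0].
Definition subP := PComp (PPrimRec (PProj 0) (PComp predP [PProj 1])) [PProj 1; PProj 0].
Definition mulP := PComp (PPrimRec PZero (PComp addP [PProj 1; PProj 2])) [PProj 1; PProj 0].
Definition powP := PComp (PPrimRec one (PComp mulP [PProj 1; PProj 2])) [PProj 1; PProj 0].
Definition sgP := PComp subP [one; PComp subP [one; PProj 0]].
Definition nsgP := PComp subP [one; PProj 0].
Definition leP := PComp nsgP [PComp subP [PProj 0; PProj 1]].
Definition ltP := PComp leP [PComp PSucc [PProj 0]; PProj 1].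
Definition ifzP := PPrimRec (PProj 0) (PProj 3).

Lemma one_ev X xs : eval one X xs 1.
Proof. eapply ev_comp. econstructor. constructor. constructor. constructor. Qed.

Lemma pred_ev X n xs : eval predP X (n :: xs) (Nat.pred n).
Proof. induction n. constructor; constructor. eapply ev_primS. apply IHn. apply ev_proj. Qed.

Create HintDb evdb.
Ltac evatom := fail.
Ltac evextra := fail.
Ltac ev :=
  match goal with
  | |- eval PZero _ _ _ => apply ev_zero
  | |- eval PSucc _ _ _ => apply ev_succ
  | |- eval (PProj _) _ _ _ => apply ev_proj
  | |- eval POracle _ _ _ => apply ev_oracle
  | |- eval (PComp _ _) _ _ _ => eapply ev_comp; [evl | ev]
  | |- eval _ _ _ _ => first [evatom | evextra | eassumption | solve [eauto 1 with evdb]]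
  end
with evl :=
  match goal with
  | |- eval_list _ _ _ _ => eassumption
  | |- eval_list [] _ _ _ => apply evl_nil
  | |- eval_list (_ :: _) _ _ _ => eapply evl_cons; [ev | evl]
  end.

Ltac evatom ::= first [ apply one_ev | apply pred_ev ].

Lemma add_ev X a b : eval addP X [a; b] (a + b).
Proof.
  unfold addP. eapply ev_comp. evl. simpl.
  induction b; simpl. constructor. eapply eval_eq; [apply ev_proj|simpl; lia].
  econstructor. apply IHb. eapply eval_eq. ev. simpl. lia.
Qed.
Ltac evatom ::= first [ apply one_ev | apply pred_ev | apply add_ev ].

Lemma sub_ev X a b : eval subP X [a; b] (a - b).
Proof.
  unfold subP. eapply ev_comp. evl. simpl.
  induction b; simpl. constructor. eapply eval_eq. apply ev_proj. simpl; lia.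
  econstructor. apply IHb. eapply eval_eq. ev. simpl. lia.
Qed.
Ltac evatom ::= first [ apply one_ev | apply pred_ev | apply add_ev | apply sub_ev ].

Lemma mul_ev X a b : eval mulP X [a; b] (a * b).
Proof.
  unfold mulP. eapply ev_comp. evl. simpl.
  induction b; simpl. eapply eval_eq. constructor. constructor. lia.
  econstructor. apply IHb. eapply eval_eq. ev. simpl. lia.
Qed.
Ltac evatom ::= first [ apply one_ev | apply pred_ev | apply add_ev | apply sub_ev | apply mul_ev ].

Lemma pow_ev X a b : eval powP X [a; b] (a ^ b).
Proof.
  unfold powP. eapply ev_comp. evl. simpl.
  induction b; simpl. constructor. apply one_ev.
  econstructor. apply IHb. eapply eval_eq. ev. simpl. lia.
Qed.

Definition sg (n : nat) := match n with 0 => 0 | _ => 1 end.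
Lemma sg_ev X a : eval sgP X [a] (sg a).
Proof. eapply eval_eq. unfold sgP. ev. destruct a; simpl; lia. Qed.
Lemma nsg_ev X a : eval nsgP X [a] (1 - a).
Proof. eapply eval_eq. unfold nsgP. ev. simpl; lia. Qed.
Definition b2nb (b : bool) := if b then 1 else 0.
Lemma le_ev X a b : eval leP X [a; b] (if a <=? b then 1 else 0).
Proof. eapply eval_eq. unfold leP. eapply ev_comp. evl. apply nsg_ev.
  case_eq (a <=? b); intros E; simpl; [apply Nat.leb_le in E; replace (a-b) with 0 by lia|apply Nat.leb_gt in E; replace (a-b) with (S (a-b-1)) by lia]; reflexivity. Qed.
Lemma lt_ev X a b : eval ltP X [a; b] (if a <? b then 1 else 0).
Proof. eapply eval_eq. unfold ltP. eapply ev_comp. evl. apply le_ev. simpl. reflexivity. Qed.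
Lemma ifz_ev X a b c xs : eval ifzP X (a :: b :: c :: xs) (match a with 0 => b | _ => c end).
Proof. induction a. constructor. apply ev_proj. eapply ev_primS. apply IHa. apply ev_proj. Qed.

Ltac evatom ::= first [ apply one_ev | apply pred_ev | apply add_ev | apply sub_ev | apply mul_ev
  | apply pow_ev | apply sg_ev | apply nsg_ev | apply le_ev | apply lt_ev | apply ifz_ev ].

Fixpoint mopt {A B} (h : A -> option B) (l : list A) : option (list B) :=
  match l with
  | [] => Some []
  | a :: l' => match h a with
               | Some b => match mopt h l' with Some bs => Some (b :: bs) | None => None end
               | None => None end
  end.

Definition mdec (s : nat) : option nat := match s with S (S v) => Some v | _ => None end.
Definition mstep (h : nat -> option nat) (c s : nat) : nat :=
  match s with
  | 0 => match h c with None => 1 | Some 0 => S (S c) | Some (S _) => 0 end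
  | _ => s end.
Definition mstate (h : nat -> option nat) (F : nat) : nat := nat_rect (fun _ => nat) 0 (mstep h) F.

Fixpoint seval (p : prog) (F : nat) (O : nat -> option bool) (xs : list nat) {struct p} : option nat :=
  match p with
  | PZero => Some 0
  | PSucc => Some (S (nth 0 xs 0))
  | PProj i => Some (nth i xs 0)
  | POracle => match O (nth 0 xs 0) with Some b => Some (b2n b) | None => None end
  | PComp f gs => match mopt (fun g => seval g F O xs) gs with
                  | Some ys => seval f F O ys | None => None end
  | PPrimRec f g => match xs with
                    | [] => None
                    | n :: xs' => nat_rect (fun _ => option nat) (seval f F O xs')
                        (fun k r => match r with Some r => seval g F O (k :: r :: xs') | None => None end) n
                    end
  | PMu f => mdec (mstate (fun c => seval f F O (c :: xs)) F)
  end.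

Ltac dsc := intros; repeat match goal with H : _ |- _ => progress (unfold mstep in H) end; simpl in *; congruence.

Lemma mstate_S h c : mstate h (S c) = mstep h c (mstate h c).
Proof. reflexivity. Qed.

Lemma mstate_inv h : forall c,
  (mstate h c = 0 -> forall m, m < c -> exists k, h m = Some (S k)) /\
  (forall v, mstate h c = S (S v) -> v < c /\ h v = Some 0 /\ forall m, m < v -> exists k, h m = Some (S k)).
Proof.
  induction c.
  - simpl. split; intros; [lia | congruence].
  - destruct IHc as [A B]. rewrite mstate_S.
    destruct (mstate h c) as [|[|s]] eqn:E; unfold mstep.
    + destruct (h c) as [[|k]|] eqn:Hc.
      * split; [intros; congruence|]. intros v Hv. injection Hv; intros; subst. split; [lia|]. split; auto.
      * split; [|intros; congruence]. intros _ m Hm. destruct (Nat.eq_dec m c); [subst; eauto|]. apply A; auto; lia.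
      * split; intros; congruence.
    + split; intros; congruence.
    + split; [intros; congruence|]. intros v Hv. injection Hv; intros; subst.
      destruct (B v eq_refl) as [H1 [H2 H3]]. split; [lia|]; auto.
Qed.

Lemma mstate_val h v : (forall m, m < v -> exists k, h m = Some (S k)) -> h v = Some 0 ->
  forall c, mstate h c = if c <=? v then 0 else S (S v).
Proof.
  intros H1 H2. induction c; [reflexivity|].
  rewrite mstate_S, IHc. unfold mstep.
  destruct (Nat.leb_spec c v).
  - destruct (Nat.eq_dec c v).
    + subst. rewrite H2. destruct (Nat.leb_spec (S v) v); [lia|reflexivity].
    + destruct (H1 c) as [k Hk]; [lia|]. rewrite Hk. destruct (Nat.leb_spec (S c) v); [reflexivity|lia].
  - destruct (Nat.leb_spec (S c) v); [lia|reflexivity].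
Qed.

Definition consistent (O : nat -> option bool) (X : cset) := forall n b, O n = Some b -> X n = b.

Lemma seval_sound : forall p F O xs y, seval p F O xs = Some y -> forall X, consistent O X -> eval p X xs y.
Proof.
  intro p; induction p using prog_ind'; intros F O xs y Hs X HX; simpl in Hs.
  - injection Hs; intros; subst; constructor.
  - injection Hs; intros; subst; constructor.
  - injection Hs; intros; subst; constructor.
  - destruct (O (nth 0 xs 0)) eqn:E; [|discriminate]. injection Hs; intros; subst.
    rewrite <- (HX _ _ E). constructor.
  - destruct (mopt (fun g => seval g F O xs) gs) as [ys|] eqn:E; [|discriminate].
    econstructor; [|eauto].
    clear Hs. revert ys E. induction H; intros ys E; simpl in E.
    + injection E; intros; subst; constructor.
    + destruct (seval x F O xs) eqn:E1; [|discriminate].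
      destruct (mopt (fun g => seval g F O xs) l) eqn:E2; [|discriminate].
      injection E; intros; subst. constructor; eauto.
  - destruct xs as [|n xs']; [discriminate|]. revert y Hs. induction n; simpl; intros y Hs.
    + constructor; eauto.
    + destruct (nat_rect _ _ _ n) as [r|] eqn:E; [|discriminate].
      econstructor; eauto.
  - destruct (mstate (fun c => seval p F O (c :: xs)) F) as [|[|v]] eqn:E; try discriminate.
    simpl in Hs; injection Hs; intros; subst.
    destruct (mstate_inv (fun c => seval p F O (c :: xs)) F) as [_ B].
    destruct (B _ E) as [_ [H2 H3]].
    constructor; eauto.
    intros m Hm. destruct (H3 m Hm) as [k Hk]. exists k; eauto.
Qed.

Definition sgood p X xs y F0 L := forall F O, F0 <= F -> (forall n, n < L -> O n = Some (X n)) -> seval p F O xs = Some y.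

Lemma sgood_mono p X xs y F0 L F1 L1 : sgood p X xs y F0 L -> F0 <= F1 -> L <= L1 -> sgood p X xs y F1 L1.
Proof. unfold sgood; intros H A B F O C D. apply H; [lia|]. intros; apply D; lia. Qed.

Lemma fin_max (Q : nat -> nat -> nat -> Prop) :
  (forall m F0 L F1 L1, Q m F0 L -> F0 <= F1 -> L <= L1 -> Q m F1 L1) ->
  forall n, (forall m, m < n -> exists F L, Q m F L) -> exists F L, forall m, m < n -> Q m F L.
Proof.
  intros Hm n. induction n; intros H.
  - exists 0, 0; intros; lia.
  - destruct IHn as [F [L HF]]. intros; apply H; lia.
    destruct (H n) as [F' [L' HF']]; [lia|].
    exists (Nat.max F F'), (Nat.max L L'). intros m Hm'.
    destruct (Nat.eq_dec m n); [subst; eapply Hm; eauto; lia|]. eapply Hm; [apply HF; lia| lia | lia].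
Qed.

Lemma seval_complete : forall p X xs y, eval p X xs y -> exists F0 L, sgood p X xs y F0 L.
Proof.
  intro p; induction p using prog_ind'; intros X xs y Hev; inversion Hev; subst.
  - exists 0, 0; intros F O _ _; reflexivity.
  - exists 0, 0; intros F O _ _; reflexivity.
  - exists 0, 0; intros F O _ _; reflexivity.
  - exists 0, (S (nth 0 xs 0)); intros F O _ HO. simpl. rewrite HO by lia. reflexivity.
  - rename H2 into Hl, H6 into Hf.
    destruct (IHp _ _ _ Hf) as [F1 [L1 G1]].
    assert (exists F L, forall F' O, F <= F' -> (forall n, n < L -> O n = Some (X n)) ->
               mopt (fun g => seval g F' O xs) gs = Some ys) as [F2 [L2 G2]].
    { clear Hev Hf G1. induction Hl.
      - exists 0, 0; intros; reflexivity.
      - inversion H; subst. destruct (H3 _ _ _ H0) as [Fa [La Ga]].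
        destruct (IHHl H4) as [Fb [Lb Gb]].
        exists (Nat.max Fa Fb), (Nat.max La Lb). intros F' O HF HO. simpl.
        rewrite (Ga F' O) by (try lia; intros; apply HO; lia).
        rewrite (Gb F' O) by (try lia; intros; apply HO; lia). reflexivity. }
    exists (Nat.max F1 F2), (Nat.max L1 L2). intros F' O HF HO. simpl.
    rewrite (G2 F' O) by (try lia; intros; apply HO; lia). apply G1; [lia|intros; apply HO; lia].
  -
    match goal with Hf : eval p1 _ _ _ |- _ => destruct (IHp1 _ _ _ Hf) as [F1 [L1 G1]] end.
    exists F1, L1. intros F O HF HO. simpl. apply G1; auto.
  -
    assert (forall k xs' y, eval (PPrimRec p1 p2) X (k :: xs') y -> exists F L, sgood (PPrimRec p1 p2) X (k :: xs') y F L) as Hgen.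
    { clear - IHp1 IHp2. intros k; induction k; intros xs' y E; inversion E; subst.
      - match goal with Hf : eval p1 _ _ _ |- _ => destruct (IHp1 _ _ _ Hf) as [F1 [L1 G1]] end.
        exists F1, L1. intros F O HF HO. simpl. apply G1; auto.
      - match goal with Hf : eval (PPrimRec _ _) _ _ _ |- _ => destruct (IHk _ _ Hf) as [F1 [L1 G1]] end.
        match goal with Hf : eval p2 _ _ _ |- _ => destruct (IHp2 _ _ _ Hf) as [F2 [L2 G2]] end.
        exists (Nat.max F1 F2), (Nat.max L1 L2). intros F O HF HO. simpl.
        specialize (G1 F O). simpl in G1. rewrite G1 by (try lia; intros; apply HO; lia).
        apply G2; [lia|intros; apply HO; lia]. }
    apply Hgen; auto.
  -
    rename y into v. match goal with Hf : eval p _ _ 0 |- _ => destruct (IHp _ _ _ Hf) as [F1 [L1 G1]] end.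
    destruct (fin_max (fun m F L => exists k, sgood p X (m :: xs) (S k) F L)) with (n := v) as [F2 [L2 G2]].
    { intros m a b c d [k Hk] e f. exists k. eapply sgood_mono; eauto. }
    { intros m Hm. match goal with H3 : forall m, m < v -> _ |- _ => destruct (H3 m Hm) as [k Hk] end. destruct (IHp _ _ _ Hk) as [F [L G]]. eauto. }
    exists (Nat.max (S v) (Nat.max F1 F2)), (Nat.max L1 L2). intros F O HF HO. simpl.
    rewrite (mstate_val _ v).
    + destruct (Nat.leb_spec F v); [lia|reflexivity].
    + intros m Hm. destruct (G2 m Hm) as [k Gk]. exists k. apply Gk; [lia|intros; apply HO; lia].
    + apply G1; [lia|intros; apply HO; lia].
Qed.

Definition ocode (o : option bool) := match o with None => 0 | Some b => S (b2n b) end.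
Definition oenc (o : option nat) := match o with None => 0 | Some v => S v end.

Lemma evl_projs X zs l : eval_list (map PProj l) X zs (map (fun i => nth i zs 0) l).
Proof. induction l; simpl; constructor; auto. apply ev_proj. Qed.

Lemma map_nth_seq : forall (v u w : list nat), map (fun i => nth i (u ++ v ++ w) 0) (seq (length u) (length v)) = v.
Proof.
  induction v as [|a v IH]; intros u w; simpl; auto.
  rewrite app_nth2 by lia. rewrite Nat.sub_diag. simpl. f_equal.
  specialize (IH (u ++ [a]) w). rewrite length_app in IH. simpl in IH.
  rewrite <- app_assoc in IH. simpl in IH. rewrite Nat.add_1_r in IH. exact IH.
Qed.

Lemma evl_app X xs l1 l2 ys1 ys2 : eval_list l1 X xs ys1 -> eval_list l2 X xs ys2 -> eval_list (l1 ++ l2) X xs (ys1 ++ ys2).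
Proof. induction 1; simpl; auto. intros; constructor; auto. Qed.

Definition prodsg (ts : list prog) := fold_right (fun t acc => PComp mulP [PComp sgP [t]; acc]) one ts.
Definition prodv (cs : list nat) := fold_right (fun c acc => sg c * acc) 1 cs.

Lemma prodsg_ev X zs ts cs : eval_list ts X zs cs -> eval (prodsg ts) X zs (prodv cs).
Proof. induction 1; simpl. apply one_ev. ev. Qed.

Lemma predmap_ev X zs ts cs : eval_list ts X zs cs -> eval_list (map (fun t => PComp predP [t]) ts) X zs (map Nat.pred cs).
Proof. induction 1; simpl; constructor; auto. ev. Qed.

Lemma mopt_some {A} (h : A -> option nat) gs ys : mopt h gs = Some ys -> map (fun g => oenc (h g)) gs = map S ys.
Proof.
  revert ys; induction gs; simpl; intros ys E. injection E; intros; subst; auto.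
  destruct (h a); [|discriminate]. destruct (mopt h gs); [|discriminate]. injection E; intros; subst.
  simpl. f_equal; auto.
Qed.

Lemma mopt_none {A} (h : A -> option nat) gs : mopt h gs = None -> prodv (map (fun g => oenc (h g)) gs) = 0.
Proof.
  induction gs; simpl; intros E. discriminate.
  destruct (h a); simpl; auto. destruct (mopt h gs); [discriminate|]. rewrite IHgs; auto; lia.
Qed.

Lemma prodv_S ys : prodv (map S ys) = 1.
Proof. induction ys; simpl; auto; lia. Qed.

Lemma map_pred_S ys : map Nat.pred (map S ys) = ys.
Proof. induction ys; simpl; f_equal; auto. Qed.

Section Tau.
Variable K : nat.
Variable q : prog.
Variable Ora : cset -> list nat -> nat -> option bool.
Hypothesis HK : 0 < K.
Hypothesis Hq : forall X ps n, length ps = K -> eval q X (ps ++ [n]) (ocode (Ora X ps n)).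

Definition params := map PProj (seq 0 K).

Fixpoint tau (p : prog) (l : nat) : prog :=
  match p with
  | PZero => PComp PSucc [PZero]
  | PSucc => PComp PSucc [PComp PSucc [PProj K]]
  | PProj i => PComp PSucc [PProj (K + i)]
  | POracle => PComp q (params ++ [PProj K])
  | PComp f gs =>
      PComp mulP [prodsg (map (fun g => tau g l) gs);
                  PComp (tau f (length gs)) (params ++ map (fun t => PComp predP [t]) (map (fun g => tau g l) gs))]
  | PPrimRec f g =>
      match l with
      | 0 => PZero
      | S l' => PComp (PPrimRec (tau f l')
                   (PComp mulP [PComp sgP [PProj 1];
                                PComp (tau g (S (S l'))) (map PProj (seq 2 K) ++ [PProj 0; PComp predP [PProj 1]] ++ map PProj (seq (K + 2) l'))]))
                  (PProj K :: params ++ map PProj (seq (S K) l'))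
      end
  | PMu f =>
      let e := PComp (tau f (S l)) (map PProj (seq 2 K) ++ [PProj 0] ++ map PProj (seq (K + 2) l)) in
      PComp subP [PComp (PPrimRec PZero
                     (PComp ifzP [PProj 1;
                                  PComp ifzP [e; one; PComp ifzP [PComp predP [e]; PComp PSucc [PComp PSucc [PProj 0]]; PZero]];
                                  PProj 1]))
                   (PProj 0 :: params ++ map PProj (seq K l)); one]
  end.

Lemma params_ev X ps xs : length ps = K -> eval_list params X (ps ++ xs) ps.
Proof.
  intros Hl. unfold params. eapply eq_ind. apply evl_projs.
  pose proof (map_nth_seq ps [] xs) as E. simpl in E. rewrite Hl in E. exact E.
Qed.

Lemma tau_ok : forall p l X ps xs, length ps = K -> length xs = l ->
  eval (tau p l) X (ps ++ xs) (oenc (seval p (nth 0 ps 0) (Ora X ps) xs)).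
Proof.
  intro p; induction p using prog_ind'; intros l X ps xs Hps Hxs; simpl.
  - ev.
  - eapply eval_eq. ev. simpl. rewrite app_nth2 by lia. rewrite Hps, Nat.sub_diag. reflexivity.
  - eapply eval_eq. ev. simpl. rewrite app_nth2 by lia. rewrite Hps. replace (K + i - K) with i by lia; reflexivity.
  - eapply eval_eq. eapply ev_comp. eapply evl_app. apply params_ev; auto. evl.
    apply Hq; auto. rewrite app_nth2 by lia. rewrite Hps, Nat.sub_diag.
    destruct (Ora X ps (nth 0 xs 0)); reflexivity.
  -
    set (F := nth 0 ps 0). set (O := Ora X ps).
    assert (HL : eval_list (map (fun g => tau g l) gs) X (ps ++ xs) (map (fun g => oenc (seval g F O xs)) gs)).
    { clear IHp. induction H; simpl; constructor; auto. }
    eapply ev_comp. constructor. apply prodsg_ev, HL. constructor.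
    eapply ev_comp. eapply evl_app. apply params_ev; auto. apply predmap_ev, HL.
    apply IHp; auto. rewrite length_map, length_map. reflexivity.
    constructor. eapply eval_eq. apply mul_ev. simpl.
    destruct (mopt (fun g => seval g F O xs) gs) as [ys|] eqn:E.
    + rewrite (mopt_some _ _ _ E), prodv_S, map_pred_S, Nat.mul_1_l. reflexivity.
    + rewrite (mopt_none _ _ E). reflexivity.
  -
    destruct xs as [|n xs']; simpl in Hxs; subst l; [constructor|].
    assert (Hargs : eval_list (PProj K :: params ++ map PProj (seq (S K) (length xs'))) X (ps ++ n :: xs') (n :: ps ++ xs')).
    { constructor. eapply eval_eq; [apply ev_proj|]. rewrite app_nth2 by lia. rewrite Hps, Nat.sub_diag; reflexivity.
      eapply evl_app. apply params_ev; auto. eapply eq_ind; [apply evl_projs|].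
      pose proof (map_nth_seq xs' (ps ++ [n]) []) as E. rewrite <- app_assoc, app_nil_r, length_app, Hps in E.
      simpl in E. rewrite Nat.add_1_r in E. exact E. }
    eapply ev_comp; [exact Hargs|]. clear Hargs.
    induction n.
    + constructor. apply IHp1; auto.
    + eapply ev_primS. exact IHn.
      eapply ev_comp.
      { constructor. eapply ev_comp. constructor. apply ev_proj. constructor. apply sg_ev.
        constructor. eapply ev_comp.
        { eapply evl_app. eapply eq_ind; [apply evl_projs|].
          pose proof (map_nth_seq ps [n; oenc (nat_rect (fun _ => option nat) (seval p1 (nth 0 ps 0) (Ora X ps) xs')
                (fun k r => match r with Some r0 => seval p2 (nth 0 ps 0) (Ora X ps) (k :: r0 :: xs') | None => None end) n)] xs') as E.
          simpl in E. rewrite Hps in E. exact E.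
          constructor. apply ev_proj. constructor. ev.
          eapply eq_ind; [apply evl_projs|].
          pose proof (map_nth_seq xs' (n :: oenc (nat_rect (fun _ => option nat) (seval p1 (nth 0 ps 0) (Ora X ps) xs')
                (fun k r => match r with Some r0 => seval p2 (nth 0 ps 0) (Ora X ps) (k :: r0 :: xs') | None => None end) n) :: ps) []) as E.
          rewrite app_nil_r in E. simpl in E. rewrite Hps in E. rewrite (Nat.add_comm K 2). exact E. }
        apply IHp2; auto; simpl; lia. constructor. }
      eapply eval_eq. apply mul_ev. simpl.
      destruct (nat_rect _ _ _ n); simpl; lia.
  -
    set (F := nth 0 ps 0). set (O := Ora X ps).
    set (h := fun c => seval p F O (c :: xs)).
    assert (Hargs : eval_list (PProj 0 :: params ++ map PProj (seq K l)) X (ps ++ xs) (F :: ps ++ xs)).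
    { constructor. eapply eval_eq; [apply ev_proj|]. unfold F. rewrite app_nth1 by lia. reflexivity.
      eapply evl_app. apply params_ev; auto. eapply eq_ind; [apply evl_projs|].
      pose proof (map_nth_seq xs ps []) as E. rewrite app_nil_r, Hps, Hxs in E. exact E. }
    match goal with |- eval (PComp subP [PComp (PPrimRec PZero ?SM) _; _]) _ _ _ =>
      assert (Hloop : forall c, eval (PPrimRec PZero SM) X (c :: ps ++ xs) (mstate h c)) end.
    2: { eapply ev_comp. constructor. eapply ev_comp. exact Hargs. apply Hloop. constructor. apply one_ev. constructor.
         eapply eval_eq. apply sub_ev. simpl. destruct (mstate h F) as [|[|v]]; reflexivity. }
    clear Hargs. intro c. induction c.
    + constructor. constructor.
    + eapply ev_primS. exact IHc.
      rewrite mstate_S.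
      assert (He : eval (PComp (tau p (S l)) (map PProj (seq 2 K) ++ PProj 0 :: map PProj (seq (K + 2) l))) X
                     (c :: mstate h c :: ps ++ xs) (oenc (h c))).
      { eapply ev_comp. eapply evl_app. eapply eq_ind; [apply evl_projs|].
        pose proof (map_nth_seq ps [c; mstate h c] xs) as E. simpl in E. rewrite Hps in E. exact E.
        constructor. apply ev_proj.
        eapply eq_ind; [apply evl_projs|].
        pose proof (map_nth_seq xs (c :: mstate h c :: ps) []) as E.
        rewrite app_nil_r in E. simpl in E. rewrite Hps, Hxs in E. rewrite (Nat.add_comm K 2). exact E.
        apply IHp; auto. simpl. lia. }
      eapply eval_eq. ev.
      simpl. unfold mstep. destruct (mstate h c); [|reflexivity].
      destruct (h c) as [[|k]|]; reflexivity.
Qed.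
End Tau.

Lemma prim_ev X f g xs (F : nat) (G : nat -> nat -> nat) :
  eval f X xs F -> (forall k r, eval g X (k :: r :: xs) (G k r)) ->
  forall n, eval (PPrimRec f g) X (n :: xs) (nat_rect (fun _ => nat) F G n).
Proof. intros Hf Hg n; induction n; simpl. constructor; auto. econstructor; eauto. Qed.

Lemma nr_S (F : nat) (G : nat -> nat -> nat) n : nat_rect (fun _ => nat) F G (S n) = G n (nat_rect (fun _ => nat) F G n).
Proof. reflexivity. Qed.

Definition divP := PComp (PPrimRec PZero (PComp addP [PProj 1; PComp leP [PComp mulP [PComp PSucc [PProj 0]; PProj 3]; PProj 2]]))
                         [PProj 0; PProj 0; PProj 1].

Lemma div_cnt a b : 0 < b -> forall n, nat_rect (fun _ => nat) 0 (fun q acc => acc + (if S q * b <=? a then 1 else 0)) n = Nat.min n (a / b).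
Proof.
  intros Hb n; induction n; [reflexivity|]. rewrite nr_S, IHn. cbv beta.
  assert (Hm : b * (a / b) <= a) by (apply Nat.Div0.mul_div_le).
  destruct (Nat.leb_spec (S n * b) a) as [H|H].
  - assert (S n <= a / b) by (apply Nat.div_le_lower_bound; lia). lia.
  - assert (a / b < S n). { destruct (Nat.le_gt_cases (S n) (a / b)); auto. nia. } lia.
Qed.

Lemma div_ev X a b : 0 < b -> eval divP X [a; b] (a / b).
Proof.
  intros Hb. unfold divP. eapply eval_eq. eapply ev_comp. evl.
  apply prim_ev with (G := fun q acc => acc + (if S q * b <=? a then 1 else 0)). constructor.
  intros k r. eapply eval_eq. ev. simpl. reflexivity.
  cbn [nth]. rewrite div_cnt by auto. apply Nat.min_r. apply Nat.Div0.div_le_upper_bound. nia.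
Qed.

Ltac evatom ::= first [ apply one_ev | apply pred_ev | apply add_ev | apply sub_ev | apply mul_ev
  | apply pow_ev | apply sg_ev | apply nsg_ev | apply le_ev | apply lt_ev | apply ifz_ev
  | (apply div_ev; simpl; lia) ].

Definition modP := PComp subP [PProj 0; PComp mulP [PProj 1; divP]].
Lemma mod_ev X a b : 0 < b -> eval modP X [a; b] (a mod b).
Proof. intros Hb. eapply eval_eq. unfold modP. ev. simpl. rewrite Nat.Div0.mod_eq. reflexivity. Qed.



Ltac evatom ::= first [ apply one_ev | apply pred_ev | apply add_ev | apply sub_ev | apply mul_ev
  | apply pow_ev | apply sg_ev | apply nsg_ev | apply le_ev | apply lt_ev | apply ifz_ev
  | (apply div_ev; simpl; lia) | (apply mod_ev; simpl; lia) ].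

Definition constP (n : nat) := nat_rect (fun _ => prog) PZero (fun _ p => PComp PSucc [p]) n.
Lemma const_ev X xs n : eval (constP n) X xs n.
Proof. induction n; simpl. constructor. eapply ev_comp. constructor. exact IHn. constructor. constructor. Qed.

Definition digitP := PComp modP [PComp divP [PProj 0; PComp powP [PProj 1; PProj 2]]; PProj 1].
Definition digit (B t n : nat) := (t / B ^ n) mod B.
Arguments digit : simpl never.
Lemma digit_ev X t B n : 0 < B -> eval digitP X [t; B; n] (digit B t n).
Proof.
  intros HB. unfold digitP. eapply ev_comp. constructor. eapply ev_comp. evl. apply div_ev.
  simpl. apply Nat.neq_0_lt_0, Nat.pow_nonzero. lia.
  constructor. apply ev_proj. constructor. apply mod_ev; auto.
Qed.

Ltac evatom ::= first [ apply one_ev | apply pred_ev | apply add_ev | apply sub_ev | apply mul_ev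
  | apply pow_ev | apply sg_ev | apply nsg_ev | apply le_ev | apply lt_ev | apply ifz_ev
  | (apply div_ev; simpl; lia) | (apply mod_ev; simpl; lia) | apply const_ev | (apply digit_ev; simpl; lia) ].

Definition tabsum (B L : nat) (f : nat -> nat) : nat := nat_rect (fun _ => nat) 0 (fun y acc => acc + f y * B ^ y) L.

Lemma tabsum_S B L f : tabsum B (S L) f = tabsum B L f + f L * B ^ L.
Proof. reflexivity. Qed.

Lemma tabsum_lt B L f : 0 < B -> (forall y, f y < B) -> tabsum B L f < B ^ L.
Proof.
  intros HB Hf. induction L. simpl. lia.
  rewrite tabsum_S, Nat.pow_succ_r'. specialize (Hf L).
  assert (f L * B ^ L <= (B - 1) * B ^ L) by (apply Nat.mul_le_mono_r; lia).
  assert ((B - 1) * B ^ L + B ^ L = B * B ^ L) by (destruct B; [lia|]; simpl; rewrite Nat.sub_0_r; lia).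
  lia.
Qed.

Lemma tabsum_digit B L f : 1 < B -> (forall y, f y < B) -> forall y, y < L -> digit B (tabsum B L f) y = f y.
Proof.
  intros HB Hf. induction L; intros y Hy; [lia|]. unfold digit in *. rewrite tabsum_S.
  assert (Hlt := tabsum_lt B L f ltac:(lia) Hf).
  assert (HBy : B ^ y <> 0) by (apply Nat.pow_nonzero; lia).
  destruct (Nat.eq_dec y L).
  - subst. rewrite Nat.div_add by auto. rewrite Nat.div_small by auto. simpl.
    apply Nat.mod_small; auto.
  - replace (f L * B ^ L) with ((f L * B ^ (L - y - 1) * B) * B ^ y).
    2: { rewrite <- !Nat.mul_assoc. f_equal. rewrite <- Nat.pow_succ_r', <- Nat.pow_add_r. f_equal. lia. }
    rewrite Nat.div_add by auto. rewrite Nat.Div0.mod_add. apply IHL. lia.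
Qed.

Lemma tabsum_digit_out B L f : 1 < B -> (forall y, f y < B) -> forall y, L <= y -> digit B (tabsum B L f) y = 0.
Proof.
  intros HB Hf y Hy. unfold digit. rewrite Nat.div_small. apply Nat.Div0.mod_0_l.
  eapply Nat.lt_le_trans. apply tabsum_lt; auto; lia. apply Nat.pow_le_mono_r; lia.
Qed.

Lemma tabsum_ext B L f g : (forall y, y < L -> f y = g y) -> tabsum B L f = tabsum B L g.
Proof. induction L; simpl; intros H; auto. rewrite IHL by (intros; apply H; lia). rewrite H by lia. auto. Qed.

Definition tri (s : nat) := nat_rect (fun _ => nat) 0 (fun i m => S i + m) s.
Lemma to_nat_tri x y : to_nat (x, y) = y + tri (y + x).
Proof. reflexivity. Qed.

Definition triP := PComp (PPrimRec PZero (PComp addP [PComp PSucc [PProj 0]; PProj 1])) [PProj 0].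
Lemma tri_ev X s : eval triP X [s] (tri s).
Proof. unfold triP. eapply ev_comp. evl. apply prim_ev. constructor. intros; ev. Qed.
Ltac evatom ::= first [ apply one_ev | apply pred_ev | apply add_ev | apply sub_ev | apply mul_ev
  | apply pow_ev | apply sg_ev | apply nsg_ev | apply le_ev | apply lt_ev | apply ifz_ev
  | (apply div_ev; simpl; lia) | (apply mod_ev; simpl; lia) | apply const_ev | (apply digit_ev; simpl; lia) | apply tri_ev ].

Definition tonatP := PComp addP [PProj 1; PComp triP [PComp addP [PProj 1; PProj 0]]].
Lemma tonat_ev X x y : eval tonatP X [x; y] (to_nat (x, y)).
Proof. eapply eval_eq. unfold tonatP. ev. reflexivity. Qed.

Lemma tri_S s : tri (S s) = S s + tri s.
Proof. reflexivity. Qed.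
Lemma tri_mono a b : a <= b -> tri a <= tri b.
Proof. induction 1; auto. rewrite tri_S. lia. Qed.
Lemma tri_ge s : s <= tri s.
Proof. induction s; auto. rewrite tri_S. lia. Qed.

Definition cntS (n : nat) := nat_rect (fun _ => nat) 0 (fun s acc => acc + (if tri (S s) <=? n then 1 else 0)) (S n).

Lemma cnt_gen n s0 : tri s0 <= n < tri (S s0) -> forall m, nat_rect (fun _ => nat) 0 (fun s acc => acc + (if tri (S s) <=? n then 1 else 0)) m = Nat.min m s0.
Proof.
  intros [H1 H2] m; induction m; [reflexivity|]. rewrite nr_S, IHm. cbv beta.
  destruct (Nat.leb_spec (tri (S m)) n) as [H|H].
  - assert (m < s0). { destruct (Nat.lt_ge_cases m s0); auto. assert (tri (S s0) <= tri (S m)) by (apply tri_mono; lia). lia. } lia.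
  - assert (s0 <= m). { destruct (Nat.lt_ge_cases m s0); auto. assert (tri (S m) <= tri s0) by (apply tri_mono; lia). lia. } lia.
Qed.

Lemma of_nat_cnt n : of_nat n = (cntS n - (n - tri (cntS n)), n - tri (cntS n)).
Proof.
  destruct (of_nat n) as [x y] eqn:E.
  assert (Hn : to_nat (x, y) = n) by (rewrite <- E; apply cancel_to_of).
  rewrite to_nat_tri in Hn.
  assert (Hc : cntS n = y + x).
  { unfold cntS. rewrite (cnt_gen n (y + x)). apply Nat.min_r. pose proof (tri_ge (y+x)). lia.
    rewrite tri_S. lia. }
  rewrite Hc. f_equal; lia.
Qed.

Definition cntP := PComp (PPrimRec PZero (PComp addP [PProj 1; PComp leP [PComp triP [PComp PSucc [PProj 0]]; PProj 2]]))
                          [PComp PSucc [PProj 0]; PProj 0].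
Lemma cnt_ev X n : eval cntP X [n] (cntS n).
Proof.
  unfold cntP. eapply ev_comp. evl. apply prim_ev with (G := fun s acc => acc + (if tri (S s) <=? n then 1 else 0)). constructor.
  intros. eapply eval_eq. ev. reflexivity.
Qed.
#[export] Hint Resolve cnt_ev : evdb.
Definition sndNP := PComp subP [PProj 0; PComp triP [cntP]].
Definition fstNP := PComp subP [cntP; sndNP].
Lemma sndN_ev X n : eval sndNP X [n] (snd (of_nat n)).
Proof. rewrite of_nat_cnt. simpl. eapply eval_eq. unfold sndNP. ev. reflexivity. Qed.
#[export] Hint Resolve sndN_ev : evdb.
Lemma fstN_ev X n : eval fstNP X [n] (fst (of_nat n)).
Proof. rewrite of_nat_cnt. simpl. eapply eval_eq. unfold fstNP. ev. rewrite of_nat_cnt. reflexivity. Qed.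

Definition evenP := PComp (PPrimRec one (PComp nsgP [PProj 1])) [PProj 0].
Lemma even_ev X n : eval evenP X [n] (b2n (Nat.even n)).
Proof.
  unfold evenP. eapply ev_comp. evl. simpl. induction n. constructor. apply one_ev.
  econstructor. apply IHn. eapply eval_eq. ev. cbn [nth]. rewrite Nat.even_succ, <- Nat.negb_even.
  destruct (Nat.even n); reflexivity.
Qed.
Definition div2P := PComp divP [PProj 0; constP 2].
Lemma div2_ev X n : eval div2P X [n] (Nat.div2 n).
Proof. rewrite Nat.div2_div. unfold div2P. ev. Qed.

Ltac evatom ::= first [ apply one_ev | apply pred_ev | apply add_ev | apply sub_ev | apply mul_ev
  | apply pow_ev | apply sg_ev | apply nsg_ev | apply le_ev | apply lt_ev | apply ifz_ev
  | (apply div_ev; simpl; lia) | (apply mod_ev; simpl; lia) | apply const_ev | (apply digit_ev; simpl; lia)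
  | apply tri_ev | apply tonat_ev | apply fstN_ev | apply sndN_ev | apply even_ev | apply div2_ev | apply cnt_ev ].

Definition prodn (f : nat -> nat) (n : nat) := nat_rect (fun _ => nat) 1 (fun i acc => acc * f i) n.
Lemma prodn_le1 f n : (forall i, f i <= 1) -> prodn f n <= 1.
Proof. intros H; induction n; simpl; auto. specialize (H n). nia. Qed.
Lemma prodn_one f n : (forall i, f i <= 1) -> (prodn f n = 1 <-> forall i, i < n -> f i = 1).
Proof.
  intros H; induction n; simpl. split; intros; auto; lia.
  pose proof (H n). pose proof (prodn_le1 f n H).
  split.
  - intros E i Hi. assert (prodn f n = 1 /\ f n = 1) as [A B] by (unfold prodn in *; nia).
    destruct (Nat.eq_dec i n); [subst; auto|]. apply IHn; auto; lia.
  - intros A. assert (prodn f n = 1) by (apply IHn; intros; apply A; lia). unfold prodn in *. rewrite H2, A; lia.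
Qed.

Definition maxn (f : nat -> nat) (n : nat) := nat_rect (fun _ => nat) 0 (fun i acc => Nat.max acc (f i)) n.
Lemma maxn_ge f n i : i < n -> f i <= maxn f n.
Proof. induction n; intros Hi; [lia|]. change (maxn f (S n)) with (Nat.max (maxn f n) (f n)).
  destruct (Nat.eq_dec i n); [subst; apply Nat.le_max_r|]. specialize (IHn ltac:(lia)).
  eapply Nat.le_trans; [exact IHn| apply Nat.le_max_l]. Qed.

Fixpoint lfind (P : nat -> bool) (c fuel : nat) : nat :=
  match fuel with 0 => c | S f => if P c then c else lfind P (S c) f end.
Lemma lfind_spec P : forall fuel c, (exists m, c <= m /\ m < c + fuel /\ P m = true) ->
  P (lfind P c fuel) = true /\ c <= lfind P c fuel /\ forall m, c <= m -> m < lfind P c fuel -> P m = false.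
Proof.
  induction fuel; intros c [m [H1 [H2 H3]]]; [lia|]. simpl.
  destruct (P c) eqn:E. split; auto. split; auto. intros; lia.
  destruct (IHfuel (S c)) as [A [B C]].
  { exists m. destruct (Nat.eq_dec c m); [subst; congruence|]. repeat split; auto; lia. }
  split; auto. split; [lia|]. intros m' Hm1 Hm2. destruct (Nat.eq_dec c m'); [subst; auto|]. apply C; lia.
Qed.

Lemma nth_map_seq {A} (f : nat -> A) N n d : n < N -> nth n (map f (seq 0 N)) d = f n.
Proof. intros H. rewrite nth_indep with (d' := f 0) by (rewrite length_map, length_seq; lia).
  rewrite map_nth, seq_nth by lia. reflexivity. Qed.

Definition bitof (o : option nat) : nat := match o with Some v => sg v | None => 0 end.

Section Inst.
Variable Phi : prog.
Hypothesis Phi_total : forall Z, exists B, computes Phi Z B.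

Definition O2 (t c : nat) (n : nat) : option bool := if n <? c then Some (digit 2 t n =? 1) else None.
Definition inner c t x := prodn (fun x' => sg (oenc (seval Phi c (O2 t c) [x']))) (S x).
Definition outer c x := prodn (fun t => inner c t x) (2 ^ c).

Lemma sg_le1 n : sg n <= 1. Proof. destruct n; simpl; lia. Qed.
Lemma inner_le1 c t x : inner c t x <= 1. Proof. apply prodn_le1. intros; apply sg_le1. Qed.

Lemma outer_spec c x : outer c x = 1 <-> forall t x', t < 2 ^ c -> x' <= x -> seval Phi c (O2 t c) [x'] <> None.
Proof.
  unfold outer. rewrite prodn_one by (intros; apply inner_le1). split.
  - intros H t x' Ht Hx. specialize (H t Ht). unfold inner in H. rewrite prodn_one in H by (intros; apply sg_le1).
    specialize (H x' ltac:(lia)). destruct (seval Phi c (O2 t c) [x']); simpl in H; congruence.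
  - intros H t Ht. unfold inner. rewrite prodn_one by (intros; apply sg_le1). intros x' Hx.
    specialize (H t x' Ht ltac:(lia)). destruct (seval Phi c (O2 t c) [x']); simpl; congruence.
Qed.

Lemma outer_le1 c x : outer c x <= 1. Proof. apply prodn_le1. intros; apply inner_le1. Qed.

Section Fan.
Variable x : nat.
Definition good (s : list bool) := forall F O, length s <= F -> (forall n, n < length s -> O n = Some (nth n s false)) ->
   forall x', x' <= x -> seval Phi F O [x'] <> None.

Lemma good_app s t : good s -> good (s ++ t).
Proof.
  intros H F O HF HO. apply H. rewrite length_app in HF; lia.
  intros n Hn. rewrite HO by (rewrite length_app; lia). rewrite app_nth1 by auto. auto.
Qed.

Lemma path_good (X : cset) : exists L, good (map X (seq 0 L)).
Proof.
  destruct (Phi_total X) as [B HB].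
  destruct (fin_max (fun m F L => sgood Phi X [m] (b2n (B m)) F L)) with (n := S x) as [F [L H]].
  { intros; eapply sgood_mono; eauto. }
  { intros m _. apply seval_complete. apply HB. }
  exists (Nat.max F L). intros F' O HF HO x' Hx. rewrite length_map, length_seq in HF.
  rewrite (H x' ltac:(lia) F' O) by (try lia; intros n Hn; rewrite HO by (rewrite length_map, length_seq; lia);
     rewrite nth_map_seq by lia; reflexivity). discriminate.
Qed.

Definition Ext (s : list bool) := forall N, exists t, length t = N /\ ~ good (s ++ t).

Lemma Ext_step s : Ext s -> Ext (s ++ [false]) \/ Ext (s ++ [true]).
Proof.
  intros H. apply NNPP. intros Hn. apply not_or_and in Hn. destruct Hn as [H0 H1].
  unfold Ext in H0, H1. apply not_all_ex_not in H0. apply not_all_ex_not in H1.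
  destruct H0 as [N0 H0]. destruct H1 as [N1 H1].
  destruct (H (S (Nat.max N0 N1))) as [t [Ht Hg]]. destruct t as [|b t']; [simpl in Ht; lia|].
  simpl in Ht.
  assert (forall (b : bool) N, ~ (exists t, length t = N /\ ~ good ((s ++ [b]) ++ t)) -> N <= length t' -> good (s ++ b :: t')) as key.
  { intros b0 N Hn HN. rewrite <- (firstn_skipn N t').
    replace (s ++ b0 :: firstn N t' ++ skipn N t') with (((s ++ [b0]) ++ firstn N t') ++ skipn N t')
      by (rewrite <- !app_assoc; reflexivity).
    apply good_app. apply NNPP. intros Hng. apply Hn. exists (firstn N t'). split; auto.
    rewrite length_firstn. lia. }
  destruct b; [apply Hg, (key true N1); auto; lia | apply Hg, (key false N0); auto; lia].
Qed.

Fixpoint pre (n : nat) : list bool :=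
  match n with 0 => [] | S n' => pre n' ++ [if excluded_middle_informative (Ext (pre n' ++ [false])) then false else true] end.

Lemma pre_len n : length (pre n) = n.
Proof. induction n; simpl; auto. rewrite length_app; simpl; lia. Qed.

Lemma pre_Ext : Ext [] -> forall n, Ext (pre n).
Proof.
  intros H0 n; induction n; simpl; auto.
  destruct (excluded_middle_informative (Ext (pre n ++ [false]))); auto.
  destruct (Ext_step _ IHn); tauto.
Qed.

Lemma pre_prefix n m : n <= m -> exists t, pre m = pre n ++ t.
Proof. induction 1. exists []; rewrite app_nil_r; auto. destruct IHle as [t E]. exists (t ++ [if excluded_middle_informative (Ext (pre m ++ [false])) then false else true]).
  simpl. rewrite E, app_assoc. auto. Qed.

Lemma fan : exists N, forall s, length s = N -> good s.
Proof.
  apply NNPP. intros Hno.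
  assert (E0 : Ext []).
  { intros N. apply NNPP. intros H. apply Hno. exists N. intros s Hs. apply NNPP. intros Hg. apply H. exists s. auto. }
  set (X := fun n => nth n (pre (S n)) false).
  destruct (path_good X) as [L HL].
  assert (map X (seq 0 L) = pre L).
  { apply nth_ext with (d := false) (d' := false). rewrite length_map, length_seq, pre_len; auto.
    intros n Hn. rewrite length_map, length_seq in Hn.
    rewrite nth_map_seq by lia. unfold X. destruct (pre_prefix (S n) L ltac:(lia)) as [t Et]. rewrite Et. rewrite app_nth1; auto. rewrite pre_len; lia. }
  rewrite H in HL. destruct (pre_Ext E0 L 0) as [t [Ht Hg]]. destruct t; [|simpl in Ht; lia].
  rewrite app_nil_r in Hg. auto.
Qed.
End Fan.

Lemma ex_outer x : exists c, outer c x = 1.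
Proof.
  destruct (fan x) as [N HN]. exists N. apply outer_spec. intros t x' Ht Hx.
  apply (HN (map (fun n => digit 2 t n =? 1) (seq 0 N))). rewrite length_map, length_seq; auto.
  rewrite length_map, length_seq; auto.
  intros n Hn. rewrite length_map, length_seq in Hn. unfold O2. destruct (Nat.ltb_spec n N); [|lia].
  rewrite nth_map_seq by lia. reflexivity. auto.
Qed.

Definition Nmod (x : nat) : nat :=
  let c0 := proj1_sig (constructive_indefinite_description _ (ex_outer x)) in
  lfind (fun c => outer c x =? 1) 0 (S c0).

Lemma Nmod_spec x : outer (Nmod x) x = 1 /\ forall m, m < Nmod x -> outer m x = 0.
Proof.
  unfold Nmod. destruct (constructive_indefinite_description _ (ex_outer x)) as [c0 H0]. simpl.
  destruct (lfind_spec (fun c => outer c x =? 1) (S c0) 0) as [A [_ C]].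
  exists c0. split; [lia|]. split; [lia|]. apply Nat.eqb_eq; auto.
  apply Nat.eqb_eq in A. split; auto. intros m Hm. specialize (C m ltac:(lia) Hm). apply Nat.eqb_neq in C.
  pose proof (outer_le1 m x). lia.
Qed.

Lemma Nmod_good x O : (forall n, n < Nmod x -> exists b, O n = Some b) -> (forall n, Nmod x <= n -> O n = None) ->
  forall x', x' <= x -> seval Phi (Nmod x) O [x'] <> None.
Proof.
  intros H1 H2 x' Hx. set (c := Nmod x) in *.
  set (f := fun n => match O n with Some true => 1 | _ => 0 end).
  set (t := tabsum 2 c f).
  assert (Hf : forall y, f y < 2) by (intros; unfold f; destruct (O y) as [[]|]; lia).
  assert (O = O2 t c).
  { extensionality n. unfold O2. destruct (Nat.ltb_spec n c).
    - destruct (H1 n H) as [b Hb]. rewrite Hb. unfold t. rewrite tabsum_digit by auto. unfold f. rewrite Hb. destruct b; auto.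
    - apply H2; auto. }
  rewrite H. destruct (Nmod_spec x) as [A _]. rewrite outer_spec in A. apply A; auto.
  apply tabsum_lt; auto.
Qed.

Definition chainlen (L n : nat) := nat_rect (fun _ => nat) L (fun _ L' => Nmod (L' - 1)) n.
Definition mj (j : nat) := maxn (fun x => maxn (fun d => chainlen (S x) d) (S j)) j.

Lemma mj_ge x d j : x < j -> d <= j -> chainlen (S x) d <= mj j.
Proof. intros; unfold mj. eapply Nat.le_trans; [|apply maxn_ge with (i := x); auto]. apply maxn_ge with (f := fun d => chainlen (S x) d). lia. Qed.

Lemma chainlen_S L n : chainlen L (S n) = chainlen (Nmod (L - 1)) n.
Proof. revert L; induction n; intros L; auto. change (chainlen L (S (S n))) with (Nmod (chainlen L (S n) - 1)). rewrite IHn. reflexivity. Qed.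

Definition OI (Z : cset) (c k tb : nat) (n : nat) : option bool :=
  if n <? c then Some (if Nat.even n then Z (to_nat (k, Nat.div2 n)) else (digit 2 tb (Nat.div2 n) =? 1)) else None.

Definition lvstep (Z : cset) (lv len c tb : nat) : nat :=
  tabsum 2 len (fun y => if y <? mj lv then 0 else bitof (seval Phi c (OI Z c lv tb) [y])).

Fixpoint Drec (Z : cset) (k L d : nat) : nat :=
  match d with 0 => 0 | S d' => lvstep Z k L (Nmod (L - 1)) (Drec Z (S k) (Nmod (L - 1)) d') end.

Fixpoint valid (k L d : nat) : Prop :=
  match d with 0 => L <= mj k | S d' => valid (S k) (Nmod (L - 1)) d' end.

Lemma valid_chain d : forall k L, valid k L d <-> chainlen L d <= mj (k + d).
Proof. induction d; intros k L; cbn [valid]. change (chainlen L 0) with L. rewrite Nat.add_0_r; tauto.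
  rewrite chainlen_S, IHd. rewrite Nat.add_succ_r. tauto. Qed.

Lemma valid_all k y : valid k (S y) (S y).
Proof. apply valid_chain. apply mj_ge; lia. Qed.

Lemma bitof_le1 o : bitof o < 2. Proof. destruct o; simpl; [pose proof (sg_le1 n)|]; lia. Qed.

Lemma lv_bit Z lv len c tb y : y < len ->
  digit 2 (lvstep Z lv len c tb) y = if y <? mj lv then 0 else bitof (seval Phi c (OI Z c lv tb) [y]).
Proof.
  intros H. unfold lvstep. rewrite tabsum_digit; auto. intros z. destruct (z <? mj lv). lia. apply bitof_le1.
Qed.

Lemma OI_succ Z x k tb y : y <= x -> seval Phi (Nmod x) (OI Z (Nmod x) k tb) [y] <> None.
Proof.
  intros Hy. apply Nmod_good; auto.
  - intros n Hn. unfold OI. destruct (Nat.ltb_spec n (Nmod x)); [eauto|lia].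
  - intros n Hn. unfold OI. destruct (Nat.ltb_spec n (Nmod x)); [lia|auto].
Qed.

Lemma div2_le n : Nat.div2 n <= n.
Proof. rewrite Nat.div2_div. apply Nat.Div0.div_le_upper_bound. lia. Qed.

Lemma digit_0 B y : digit B 0 y = 0.
Proof. unfold digit. rewrite Nat.Div0.div_0_l. apply Nat.Div0.mod_0_l. Qed.

Lemma Drec_cons Z : forall d k L L' d' y, valid k L d -> valid k L' d' -> y < L -> y < L' ->
  digit 2 (Drec Z k L d) y = digit 2 (Drec Z k L' d') y.
Proof.
  induction d as [|d IH]; intros k L L' d' y V V' H H'.
  - simpl in V. destruct d' as [|d']; auto. cbn [Drec]. rewrite lv_bit by auto.
    destruct (Nat.ltb_spec y (mj k)); [|lia]. rewrite digit_0; reflexivity.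
  - destruct d' as [|d'].
    + simpl in V'. cbn [Drec]. rewrite lv_bit by auto. destruct (Nat.ltb_spec y (mj k)); [|lia]. rewrite digit_0; reflexivity.
    + simpl Drec. rewrite !lv_bit by auto. destruct (Nat.ltb_spec y (mj k)); auto.
      simpl in V, V'.
      set (c := Nmod (L - 1)) in *. set (c' := Nmod (L' - 1)) in *.
      set (tb := Drec Z (S k) c d). set (tb' := Drec Z (S k) c' d').
      destruct (seval Phi c (OI Z c k tb) [y]) as [v|] eqn:E1.
      2: { exfalso. apply (OI_succ Z (L - 1) k tb y); auto. lia. }
      destruct (seval Phi c' (OI Z c' k tb') [y]) as [v'|] eqn:E2.
      2: { exfalso. apply (OI_succ Z (L' - 1) k tb' y); auto. lia. }
      set (X := fun n => if Nat.even n then Z (to_nat (k, Nat.div2 n))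
                         else if Nat.div2 n <? c then digit 2 tb (Nat.div2 n) =? 1 else digit 2 tb' (Nat.div2 n) =? 1).
      assert (eval Phi X [y] v).
      { eapply seval_sound; eauto. intros n b Hn. unfold OI in Hn. destruct (Nat.ltb_spec n c); [|discriminate].
        injection Hn; intros; subst. unfold X. destruct (Nat.even n); auto.
        pose proof (div2_le n). destruct (Nat.ltb_spec (Nat.div2 n) c); auto; lia. }
      assert (eval Phi X [y] v').
      { eapply seval_sound; eauto. intros n b Hn. unfold OI in Hn. destruct (Nat.ltb_spec n c'); [|discriminate].
        injection Hn; intros; subst. unfold X. destruct (Nat.even n); auto.
        pose proof (div2_le n). destruct (Nat.ltb_spec (Nat.div2 n) c); auto.
        unfold tb, tb'. rewrite (IH (S k) c c' d'); auto. lia. }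
      rewrite (eval_det _ _ _ _ H1 _ H2). reflexivity.
Qed.

Definition Cfun (Z : cset) (k y : nat) : bool := digit 2 (Drec Z k (S y) (S y)) y =? 1.

Lemma Cfun_low Z k x : x < mj k -> Cfun Z k x = false.
Proof. intros H. unfold Cfun. cbn [Drec]. rewrite lv_bit by lia. destruct (Nat.ltb_spec x (mj k)); [|lia]. reflexivity. Qed.

Lemma Cfun_high Z k x B : mj k <= x -> computes Phi (join (column Z k) (Cfun Z (S k))) B -> Cfun Z k x = B x.
Proof.
  intros Hx HB. unfold Cfun. cbn [Drec]. rewrite lv_bit by lia. destruct (Nat.ltb_spec x (mj k)); [lia|].
  replace (S x - 1) with x in * by lia. try rewrite Nat.sub_0_r.
  set (c := Nmod x). set (tb := Drec Z (S k) c x).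
  destruct (seval Phi c (OI Z c k tb) [x]) as [v|] eqn:E1.
  2: { exfalso. apply (OI_succ Z x k tb x); auto. }
  assert (eval Phi (join (column Z k) (Cfun Z (S k))) [x] v).
  { eapply seval_sound; eauto. intros n b Hn. unfold OI in Hn. destruct (Nat.ltb_spec n c); [|discriminate].
    injection Hn; intros; subst. unfold join. destruct (Nat.even n); auto.
    unfold Cfun. f_equal. unfold tb. apply Drec_cons.
    - apply valid_all.
    - pose proof (valid_all k x) as V. simpl in V. rewrite Nat.sub_0_r in V. exact V.
    - lia.
    - pose proof (div2_le n); lia. }
  rewrite (eval_det _ _ _ _ H0 _ (HB x)). destruct (B x); reflexivity.
Qed.

End Inst.

Lemma digit_lt B t n : 0 < B -> digit B t n < B.
Proof. intros; unfold digit. apply Nat.mod_upper_bound. lia. Qed.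
Lemma digit2_b2n t n : b2n (digit 2 t n =? 1) = digit 2 t n.
Proof. pose proof (digit_lt 2 t n ltac:(lia)). destruct (digit 2 t n) as [|[|]]; simpl; auto; lia. Qed.

Definition maxP := PComp addP [PProj 0; PComp subP [PProj 1; PProj 0]].
Lemma max_ev X a b : eval maxP X [a; b] (Nat.max a b).
Proof. eapply eval_eq. unfold maxP. ev. simpl. lia. Qed.
#[export] Hint Resolve max_ev : evdb.

Section InstA.
Variable Phi : prog.
Hypothesis Phi_total : forall Z, exists B, computes Phi Z B.

Definition q1 := PComp ifzP [PComp ltP [PProj 2; PProj 0]; PZero; PComp PSucc [PComp digitP [PProj 1; constP 2; PProj 2]]].
Definition Ora1 (X : cset) (ps : list nat) (n : nat) := O2 (nth 1 ps 0) (nth 0 ps 0) n.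
Lemma Hq1 X ps n : length ps = 2 -> eval q1 X (ps ++ [n]) (ocode (Ora1 X ps n)).
Proof.
  intros Hl. destruct ps as [|c [|t [|]]]; simpl in Hl; try lia. simpl.
  eapply eval_eq. unfold q1. ev. simpl. unfold Ora1, O2. simpl.
  destruct (Nat.ltb_spec n c); simpl; auto. rewrite digit2_b2n. reflexivity.
Qed.

Definition TM := tau 2 q1 Phi 1.
Lemma TM_ev X c t x : eval TM X [c; t; x] (oenc (seval Phi c (O2 t c) [x])).
Proof. apply (tau_ok 2 q1 Ora1 ltac:(lia) Hq1 Phi 1 X [c; t] [x]); reflexivity. Qed.
Hint Resolve TM_ev : evdb.

Definition innerP := PComp (PPrimRec one (PComp mulP [PProj 1; PComp sgP [PComp TM [PProj 2; PProj 3; PProj 0]]]))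
                           [PComp PSucc [PProj 2]; PProj 0; PProj 1].
Lemma inner_ev X c t x : eval innerP X [c; t; x] (inner Phi c t x).
Proof. unfold innerP. eapply ev_comp. evl. apply prim_ev. apply one_ev. intros. ev. Qed.
Hint Resolve inner_ev : evdb.

Definition outerP := PComp (PPrimRec one (PComp mulP [PProj 1; PComp innerP [PProj 2; PProj 0; PProj 3]]))
                           [PComp powP [constP 2; PProj 0]; PProj 0; PProj 1].
Lemma outer_ev X c x : eval outerP X [c; x] (outer Phi c x).
Proof. unfold outerP. eapply ev_comp. evl. apply prim_ev. apply one_ev. intros. ev. Qed.
Hint Resolve outer_ev : evdb.

Definition NmodP := PMu (PComp nsgP [PComp outerP [PProj 0; PProj 1]]).
Lemma Nmod_ev X x : eval NmodP X [x] (Nmod Phi Phi_total x).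
Proof.
  destruct (Nmod_spec Phi Phi_total x) as [A B]. constructor.
  - eapply eval_eq. ev. simpl. rewrite A. reflexivity.
  - intros m Hm. exists 0. eapply eval_eq. ev. simpl. rewrite B; auto.
Qed.
Hint Resolve Nmod_ev : evdb.

Definition chainP := PComp (PPrimRec (PProj 0) (PComp NmodP [PComp predP [PProj 1]])) [PProj 1; PProj 0].
Lemma chain_ev X L n : eval chainP X [L; n] (chainlen Phi Phi_total L n).
Proof.
  unfold chainP. eapply ev_comp. evl. apply prim_ev. apply ev_proj.
  intros. eapply eval_eq. ev. simpl. rewrite Nat.sub_1_r. reflexivity.
Qed.
Hint Resolve chain_ev : evdb.

Definition mP := PComp (PPrimRec PZero (PComp maxP [PProj 1;
                   PComp (PPrimRec PZero (PComp maxP [PProj 1; PComp chainP [PComp PSucc [PProj 2]; PProj 0]]))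
                         [PComp PSucc [PProj 2]; PProj 0]])) [PProj 0; PProj 0].
Lemma m_ev X j : eval mP X [j] (mj Phi Phi_total j).
Proof.
  unfold mP. eapply ev_comp. evl. apply prim_ev. constructor.
  intros k r. eapply eval_eq. eapply ev_comp. constructor. apply ev_proj. constructor. eapply ev_comp. evl.
  apply prim_ev with (G := fun d acc => Nat.max acc (chainlen Phi Phi_total (S k) d)). constructor.
  intros. eapply eval_eq. ev. reflexivity. constructor. apply max_ev. reflexivity.
Qed.
Hint Resolve m_ev : evdb.
End InstA.
#[export] Hint Resolve TM_ev inner_ev outer_ev : evdb.
#[export] Hint Extern 1 (eval (mP ?P) _ _ _) => match goal with H : forall Z, exists B, computes P Z B |- _ => apply (m_ev P H) end : evdb.
#[export] Hint Extern 1 (eval (NmodP ?P) _ _ _) => match goal with H : forall Z, exists B, computes P Z B |- _ => apply (Nmod_ev P H) end : evdb.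
#[export] Hint Extern 1 (eval (chainP ?P) _ _ _) => match goal with H : forall Z, exists B, computes P Z B |- _ => apply (chain_ev P H) end : evdb.


Section InstB.
Variable Phi : prog.
Hypothesis Phi_total : forall Z, exists B, computes Phi Z B.
Variable zr : prog.
Variable zf : cset -> cset.
Hypothesis Hzr : forall X m, eval zr X [m] (b2n (zf X m)).

Definition q2 := PComp ifzP [PComp ltP [PProj 3; PProj 0]; PZero;
   PComp PSucc [PComp ifzP [PComp evenP [PProj 3]; PComp digitP [PProj 2; constP 2; PComp div2P [PProj 3]];
                            PComp zr [PComp tonatP [PProj 1; PComp div2P [PProj 3]]]]]].
Definition Ora2 (X : cset) (ps : list nat) (n : nat) := OI (zf X) (nth 0 ps 0) (nth 1 ps 0) (nth 2 ps 0) n.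
Lemma Hq2 X ps n : length ps = 3 -> eval q2 X (ps ++ [n]) (ocode (Ora2 X ps n)).
Proof.
  intros Hl. destruct ps as [|c [|k [|tb [|]]]]; simpl in Hl; try lia. simpl.
  eapply eval_eq. unfold q2. ev. simpl. unfold Ora2, OI. simpl.
  destruct (Nat.ltb_spec n c); simpl; auto. destruct (Nat.even n); simpl; auto. rewrite digit2_b2n. reflexivity.
Qed.

Definition TI := tau 3 q2 Phi 1.
Lemma TI_ev X c k tb y : eval TI X [c; k; tb; y] (oenc (seval Phi c (OI (zf X) c k tb) [y])).
Proof. apply (tau_ok 3 q2 Ora2 ltac:(lia) Hq2 Phi 1 X [c; k; tb] [y]); reflexivity. Qed.
Hint Resolve TI_ev : evdb.

Definition lvP := PComp (PPrimRec PZero (PComp addP [PProj 1; PComp mulP [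
      PComp ifzP [PComp ltP [PProj 0; PComp (mP Phi) [PProj 2]];
                  PComp sgP [PComp predP [PComp TI [PProj 3; PProj 2; PProj 4; PProj 0]]]; PZero];
      PComp powP [constP 2; PProj 0]]]))
   [PProj 1; PProj 0; PProj 2; PProj 3].
Lemma lv_ev X lv len c tb : eval lvP X [lv; len; c; tb] (lvstep Phi Phi_total (zf X) lv len c tb).
Proof.
  unfold lvP. eapply ev_comp. evl. apply prim_ev. constructor.
  intros y acc. eapply eval_eq. ev. simpl.
  destruct (y <? mj Phi Phi_total lv); simpl; auto.
  destruct (seval Phi c (OI (zf X) c lv tb) [y]); reflexivity.
Qed.
Hint Resolve lv_ev : evdb.

Definition Dloop (Z : cset) (k L d e : nat) :=
  nat_rect (fun _ => nat) 0 (fun e' tb => lvstep Phi Phi_total Z (k + d - S e') (chainlen Phi Phi_total L (d - S e'))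
                                           (chainlen Phi Phi_total L (d - e')) tb) e.

Lemma Dloop_Drec Z k L d : forall e, e <= d -> Dloop Z k L d e = Drec Phi Phi_total Z (k + d - e) (chainlen Phi Phi_total L (d - e)) e.
Proof.
  induction e; intros He. reflexivity.
  change (Dloop Z k L d (S e)) with (lvstep Phi Phi_total Z (k + d - S e) (chainlen Phi Phi_total L (d - S e))
                                           (chainlen Phi Phi_total L (d - e)) (Dloop Z k L d e)).
  rewrite IHe by lia. cbn [Drec].
  replace (S (k + d - S e)) with (k + d - e) by lia.
  replace (d - e) with (S (d - S e)) by lia. reflexivity.
Qed.

Definition DloopP := PComp (PPrimRec PZero (PComp lvP [PComp subP [PComp addP [PProj 2; PProj 4]; PComp PSucc [PProj 0]];
     PComp (chainP Phi) [PProj 3; PComp subP [PProj 4; PComp PSucc [PProj 0]]];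
     PComp (chainP Phi) [PProj 3; PComp subP [PProj 4; PProj 0]]; PProj 1]))
   [PProj 3; PProj 0; PProj 1; PProj 2].
Lemma Dloop_ev X k L d e : eval DloopP X [k; L; d; e] (Dloop (zf X) k L d e).
Proof. unfold DloopP. eapply ev_comp. evl. apply prim_ev. constructor. intros. ev. Qed.
Hint Resolve Dloop_ev : evdb.

Definition CP := PComp digitP [PComp DloopP [PProj 0; PComp PSucc [PProj 1]; PComp PSucc [PProj 1]; PComp PSucc [PProj 1]];
                               constP 2; PProj 1].
Lemma C_ev X k y : eval CP X [k; y] (b2n (Cfun Phi Phi_total (zf X) k y)).
Proof.
  eapply eval_eq. unfold CP. ev. cbn [nth]. rewrite Dloop_Drec by lia. rewrite Nat.sub_diag.
  replace (k + S y - S y) with k by lia. unfold Cfun. rewrite digit2_b2n. reflexivity.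
Qed.
End InstB.

Definition dec3 (d : nat) : option bool := match d with 0 => None | 1 => Some false | _ => Some true end.
Definition Otab (t len n : nat) : option bool := if n <? len then dec3 (digit 3 t n) else None.
Definition enc3 (o : option nat) : nat := match o with None => 0 | Some v => S (sg v) end.

Lemma enc3_lt o : enc3 o < 3. Proof. destruct o; simpl; [pose proof (sg_le1 n)|]; lia. Qed.
Lemma ocode_dec3 d : d < 3 -> ocode (dec3 d) = d.
Proof. destruct d as [|[|[|]]]; simpl; auto; lia. Qed.

Lemma cmax (P : nat -> nat -> Prop) : (forall n, exists c0, forall c, c0 <= c -> P n c) ->
  forall L, exists c0, forall n, n < L -> forall c, c0 <= c -> P n c.
Proof.
  intros H L; induction L. exists 0; intros; lia.
  destruct IHL as [a Ha]. destruct (H L) as [b Hb]. exists (Nat.max a b). intros n Hn c Hc.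
  destruct (Nat.eq_dec n L); [subst; apply Hb; lia|]. apply Ha; lia.
Qed.

Section Sol.
Variable Phi : prog.
Hypothesis Phi_total : forall Z, exists B, computes Phi Z B.
Variables Theta Psi : prog.
Variable tr : prog.
Variable tf : cset -> cset.
Hypothesis Htr : forall X m, eval tr X [m] (b2n (tf X m)).
Variable qW : prog.
Variable OW : cset -> nat -> nat -> nat -> nat -> option bool.
Hypothesis HqW : forall X c k tS n, eval qW X [c; k; tS; n] (ocode (OW X c k tS n)).

Definition mjj := mj Phi Phi_total.

Definition OR (X : cset) (c k tW : nat) (n : nat) : option bool :=
  match k with 0 => Some (tf X n) | _ => Otab tW c (2 * n + 1) end.
Definition tabS X c k tW := tabsum 3 c (fun y => enc3 (seval Theta c (OR X c k tW) [mjj k; y])).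
Definition tabW X c k tS := tabsum 3 c (fun y => enc3 (seval Psi c (OW X c k tS) [y])).
Definition Lt X c (k : nat) := nat_rect (fun _ => nat) 0 (fun k tW => tabW X c k (tabS X c k tW)) k.
Definition ans X c i x := digit 3 (Lt X c (S i)) (2 * x).

Definition qR := PComp ifzP [PProj 1; PComp PSucc [PComp tr [PProj 3]];
   PComp ifzP [PComp ltP [PComp PSucc [PComp mulP [constP 2; PProj 3]]; PProj 0]; PZero;
               PComp digitP [PProj 2; constP 3; PComp PSucc [PComp mulP [constP 2; PProj 3]]]]].
Definition OraR (X : cset) (ps : list nat) (n : nat) := OR X (nth 0 ps 0) (nth 1 ps 0) (nth 2 ps 0) n.
Lemma HqR X ps n : length ps = 3 -> eval qR X (ps ++ [n]) (ocode (OraR X ps n)).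
Proof.
  intros Hl. destruct ps as [|c [|k [|tW [|]]]]; simpl in Hl; try lia. simpl.
  eapply eval_eq. unfold qR. ev. simpl. unfold OraR, OR. simpl.
  destruct k; simpl; auto. unfold Otab. replace (n + (n + 0) + 1) with (S (n + (n + 0))) by lia.
  destruct (S (n + (n + 0)) <? c); simpl; auto. rewrite ocode_dec3; auto. apply digit_lt; lia.
Qed.

Definition TT := tau 3 qR Theta 2.
Lemma TT_ev X c k tW m y : eval TT X [c; k; tW; m; y] (oenc (seval Theta c (OR X c k tW) [m; y])).
Proof. apply (tau_ok 3 qR OraR ltac:(lia) HqR Theta 2 X [c; k; tW] [m; y]); reflexivity. Qed.

Definition OraW (X : cset) (ps : list nat) (n : nat) := OW X (nth 0 ps 0) (nth 1 ps 0) (nth 2 ps 0) n.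
Lemma HqW' X ps n : length ps = 3 -> eval qW X (ps ++ [n]) (ocode (OraW X ps n)).
Proof. intros Hl. destruct ps as [|c [|k [|tS [|]]]]; simpl in Hl; try lia. apply HqW. Qed.
Definition TW := tau 3 qW Psi 1.
Lemma TW_ev X c k tS y : eval TW X [c; k; tS; y] (oenc (seval Psi c (OW X c k tS) [y])).
Proof. apply (tau_ok 3 qW OraW ltac:(lia) HqW' Psi 1 X [c; k; tS] [y]); reflexivity. Qed.

Definition enc3P (e : prog) := PComp ifzP [e; PZero; PComp PSucc [PComp sgP [PComp predP [e]]]].
Lemma enc3_ev X xs e o : eval e X xs (oenc o) -> eval (enc3P e) X xs (enc3 o).
Proof. intros H. eapply eval_eq. unfold enc3P. ev. destruct o; reflexivity. Qed.

Ltac evextra ::= apply enc3_ev; ev.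
Hint Resolve TT_ev TW_ev : evdb.

Definition tabSP := PComp (PPrimRec PZero (PComp addP [PProj 1; PComp mulP [
      enc3P (PComp TT [PProj 2; PProj 3; PProj 4; PComp (mP Phi) [PProj 3]; PProj 0]);
      PComp powP [constP 3; PProj 0]]])) [PProj 0; PProj 0; PProj 1; PProj 2].
Lemma tabS_ev X c k tW : eval tabSP X [c; k; tW] (tabS X c k tW).
Proof.
  unfold tabSP. eapply ev_comp. evl. apply prim_ev. constructor. intros. ev.
Qed.
Definition tabWP := PComp (PPrimRec PZero (PComp addP [PProj 1; PComp mulP [
      enc3P (PComp TW [PProj 2; PProj 3; PProj 4; PProj 0]);
      PComp powP [constP 3; PProj 0]]])) [PProj 0; PProj 0; PProj 1; PProj 2].
Lemma tabW_ev X c k tS : eval tabWP X [c; k; tS] (tabW X c k tS).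
Proof.
  unfold tabWP. eapply ev_comp. evl. apply prim_ev. constructor. intros. ev.
Qed.
Hint Resolve tabS_ev tabW_ev : evdb.
Definition LP := PComp (PPrimRec PZero (PComp tabWP [PProj 2; PProj 0; PComp tabSP [PProj 2; PProj 0; PProj 1]])) [PProj 1; PProj 0].
Lemma L_ev X c k : eval LP X [c; k] (Lt X c k).
Proof. unfold LP. eapply ev_comp. evl. apply prim_ev. constructor. intros. ev. Qed.
Hint Resolve L_ev : evdb.
Definition ansP := PComp digitP [PComp LP [PProj 0; PComp PSucc [PProj 1]]; constP 3; PComp mulP [constP 2; PProj 2]].
Lemma ans_ev X c i x : eval ansP X [c; i; x] (ans X c i x).
Proof. unfold ansP. eapply eval_eq. ev. reflexivity. Qed.
Hint Resolve ans_ev : evdb.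

Variable X : cset.
Variables Rt St Wt PsiOr : nat -> cset.
Hypothesis H1 : forall k, computes2 Theta (Rt k) (mjj k) (St k).
Hypothesis H2 : forall k, computes Psi (PsiOr k) (Wt k).
Hypothesis H30 : Rt 0 = tf X.
Hypothesis H3S : forall k, Rt (S k) = right_part (Wt k).
Hypothesis HOWs : forall c k tS n b, (forall y b', Otab tS c y = Some b' -> St k y = b') -> OW X c k tS n = Some b -> PsiOr k n = b.
Hypothesis HOWc : forall c k tS n, (forall y, y <= n -> Otab tS c y = Some (St k y)) -> OW X c k tS n = Some (PsiOr k n).

Lemma Otab_tab c f y b : (forall z, f z < 3) -> Otab (tabsum 3 c f) c y = Some b -> y < c /\ dec3 (f y) = Some b.
Proof.
  intros Hf H. unfold Otab in H. destruct (Nat.ltb_spec y c); [|discriminate]. rewrite tabsum_digit in H; auto.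
Qed.

Lemma dec3_enc3 o b : dec3 (enc3 o) = Some b -> exists v, o = Some v /\ b = negb (sg v =? 0).
Proof. destruct o as [v|]; simpl; [|discriminate]. destruct v; simpl; intros H; injection H; intros; subst; eauto. Qed.

Lemma soundS c k : (forall n b, OR X c k (Lt X c k) n = Some b -> Rt k n = b) ->
  forall y b, Otab (tabS X c k (Lt X c k)) c y = Some b -> St k y = b.
Proof.
  intros HR y b H. apply Otab_tab in H; [|intros; apply enc3_lt]. destruct H as [_ H].
  apply dec3_enc3 in H. destruct H as [v [E Hb]]. subst b.
  eapply seval_sound in E; [|exact HR]. rewrite (eval_det _ _ _ _ E _ (H1 k y)). destruct (St k y); reflexivity.
Qed.

Lemma soundW c k tS : (forall y b, Otab tS c y = Some b -> St k y = b) ->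
  forall y b, Otab (tabW X c k tS) c y = Some b -> Wt k y = b.
Proof.
  intros HS y b H. apply Otab_tab in H; [|intros; apply enc3_lt]. destruct H as [_ H].
  apply dec3_enc3 in H. destruct H as [v [E Hb]]. subst b.
  eapply seval_sound in E. rewrite (eval_det _ _ _ _ E _ (H2 k y)). destruct (Wt k y); reflexivity.
  intros n b Hn. eapply HOWs; eauto.
Qed.

Lemma sound_all c : forall k y b, Otab (Lt X c (S k)) c y = Some b -> Wt k y = b.
Proof.
  induction k.
  - apply soundW. apply soundS. intros n b H. simpl in H. injection H; intros; subst. rewrite H30; auto.
  - apply soundW. apply soundS. intros n b H. simpl OR in H. rewrite H3S. unfold right_part.
    apply IHk. replace (2 * n + 1) with (n + n + 1) in H by lia. apply H.
Qed.

Lemma complete_all : forall k,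
  (forall y, exists c0, forall c, c0 <= c -> Otab (tabS X c k (Lt X c k)) c y = Some (St k y)) /\
  (forall y, exists c0, forall c, c0 <= c -> Otab (Lt X c (S k)) c y = Some (Wt k y)).
Proof.
  assert (HS : forall k, (forall L, exists c0, forall n, n < L -> forall c, c0 <= c -> OR X c k (Lt X c k) n = Some (Rt k n)) ->
     forall y, exists c0, forall c, c0 <= c -> Otab (tabS X c k (Lt X c k)) c y = Some (St k y)).
  { intros k HR y. destruct (seval_complete _ _ _ _ (H1 k y)) as [F0 [L G]].
    destruct (HR L) as [c1 Hc1]. exists (Nat.max (S y) (Nat.max F0 c1)). intros c Hc.
    unfold Otab. destruct (Nat.ltb_spec y c); [|lia]. unfold tabS. rewrite tabsum_digit by (auto; intros; apply enc3_lt).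
    rewrite (G c (OR X c k (Lt X c k))) by (try lia; intros; apply Hc1; lia).
    destruct (St k y); reflexivity. }
  assert (HW : forall k, (forall y, exists c0, forall c, c0 <= c -> Otab (tabS X c k (Lt X c k)) c y = Some (St k y)) ->
     forall y, exists c0, forall c, c0 <= c -> Otab (Lt X c (S k)) c y = Some (Wt k y)).
  { intros k HSk y. destruct (seval_complete _ _ _ _ (H2 k y)) as [F0 [L G]].
    destruct (cmax (fun n c => Otab (tabS X c k (Lt X c k)) c n = Some (St k n)) HSk L) as [c1 Hc1].
    exists (Nat.max (S y) (Nat.max F0 c1)). intros c Hc.
    unfold Otab. destruct (Nat.ltb_spec y c); [|lia]. change (Lt X c (S k)) with (tabW X c k (tabS X c k (Lt X c k))).
    unfold tabW. rewrite tabsum_digit by (auto; intros; apply enc3_lt).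
    rewrite (G c (OW X c k (tabS X c k (Lt X c k)))).
    destruct (Wt k y); reflexivity. lia.
    intros n Hn. apply HOWc. intros y' Hy'. apply Hc1; lia. }
  induction k.
  - assert (A : forall y, exists c0, forall c, c0 <= c -> Otab (tabS X c 0 (Lt X c 0)) c y = Some (St 0 y)).
    { apply HS. intros L. exists 0. intros n _ c _. simpl. rewrite H30. reflexivity. }
    split; auto.
  - destruct IHk as [_ IW].
    assert (A : forall y, exists c0, forall c, c0 <= c -> Otab (tabS X c (S k) (Lt X c (S k))) c y = Some (St (S k) y)).
    { apply HS. intros L. destruct (cmax (fun n c => Otab (Lt X c (S k)) c n = Some (Wt k n)) IW (2 * L)) as [c1 Hc1].
      exists c1. intros n Hn c Hc. simpl OR. rewrite H3S. unfold right_part. replace (n + n + 1) with (2 * n + 1) by lia.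
      apply Hc1; lia. }
    split; auto.
Qed.

Lemma ans_sound c i x : ans X c i x <> 0 -> ans X c i x = S (b2n (Wt i (2 * x))).
Proof.
  intros H. unfold ans in *.
  assert (Hl : digit 3 (Lt X c (S i)) (2 * x) < 3) by (apply digit_lt; lia).
  destruct (Nat.ltb_spec (2 * x) c) as [Hc|Hc].
  - assert (Otab (Lt X c (S i)) c (2 * x) = dec3 (digit 3 (Lt X c (S i)) (2 * x))) as E
      by (unfold Otab; destruct (Nat.ltb_spec (2 * x) c); auto; lia).
    destruct (digit 3 (Lt X c (S i)) (2 * x)) as [|[|[|]]] eqn:D; try lia;
    cbn [dec3] in E; apply sound_all in E; rewrite E; reflexivity.
  - exfalso. apply H. destruct i; simpl Lt; unfold tabW; apply tabsum_digit_out; auto; intros; apply enc3_lt.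
Qed.

Lemma ans_complete i x : exists c0, forall c, c0 <= c -> ans X c i x <> 0.
Proof.
  destruct (complete_all i) as [_ W]. destruct (W (2 * x)) as [c0 Hc0]. exists c0. intros c Hc.
  specialize (Hc0 c Hc). unfold Otab in Hc0. unfold ans. destruct (2 * x <? c); [|discriminate].
  destruct (digit 3 (Lt X c (S i)) (2 * x)); simpl in Hc0; discriminate.
Qed.

End Sol.

Definition pick (P : cset -> Prop) : cset :=
  match excluded_middle_informative (exists X, P X) with
  | left H => proj1_sig (constructive_indefinite_description _ H)
  | right _ => fun _ => false end.
Lemma pick_spec P : (exists X, P X) -> P (pick P).
Proof. intros H. unfold pick. destruct (excluded_middle_informative (exists X, P X)); [|tauto].
  destruct (constructive_indefinite_description _ e); auto. Qed.

Lemma least_ex (P : nat -> Prop) n : P n -> exists c, P c /\ forall m, m < c -> ~ P m.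
Proof.
  assert (forall k, (exists c, c <= k /\ P c) -> exists c, P c /\ forall m, m < c -> ~ P m).
  { induction k; intros [c [Hc Pc]].
    - exists 0. split. replace 0 with c by lia; auto. intros; lia.
    - destruct (classic (exists c, c <= k /\ P c)) as [E|E]; auto.
      exists (S k). assert (c = S k). { destruct (Nat.eq_dec c (S k)); auto. exfalso. apply E. exists c; split; auto; lia. }
      subst; split; auto. intros m Hm Pm. apply E. exists m; split; auto; lia. }
  intros Pn. apply (H n). exists n; auto.
Qed.

Lemma left_join A B : left_part (join A B) = A.
Proof. extensionality x. unfold left_part, join. rewrite Nat.even_even, Nat.div2_double. reflexivity. Qed.
Lemma right_join A B : right_part (join A B) = B.
Proof. extensionality x. unfold right_part, join. rewrite Nat.even_odd, Nat.div2_odd'. reflexivity. Qed.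

Lemma b2n_inj a b : b2n a = b2n b -> a = b.
Proof. destruct a, b; simpl; congruence. Qed.

Lemma computes_unique p X A B : computes p X A -> computes p X B -> A = B.
Proof. intros HA HB. extensionality n. apply b2n_inj. eapply eval_det; eauto. Qed.

Section Out.
Variable Phi : prog.
Hypothesis Phi_total : forall Z, exists B, computes Phi Z B.
Variables Theta Psi tr : prog.
Variable tf : cset -> cset.
Hypothesis Htr : forall X m, eval tr X [m] (b2n (tf X m)).
Variable qW : prog.
Variable OW : cset -> nat -> nat -> nat -> nat -> option bool.
Hypothesis HqW : forall X c k tS n, eval qW X [c; k; tS; n] (ocode (OW X c k tS n)).

Definition SRCH := PMu (PComp nsgP [PComp sgP [PComp (ansP Phi Theta Psi tr qW) [PProj 0; PProj 1; PProj 2]]]).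
Definition PsiNew := PComp predP [PComp (ansP Phi Theta Psi tr qW) [PComp SRCH [fstNP; sndNP]; fstNP; sndNP]].

Lemma ans_ev' Y c i x : eval (ansP Phi Theta Psi tr qW) Y [c; i; x] (ans Phi Phi_total Theta Psi tf OW Y c i x).
Proof. apply (ans_ev Phi Phi_total Theta Psi tr tf Htr qW OW HqW). Qed.
Hint Resolve ans_ev' : evdb.
Variable X : cset.
Variables Rt St Wt PsiOr : nat -> cset.
Hypothesis H1 : forall k, computes2 Theta (Rt k) (mjj Phi Phi_total k) (St k).
Hypothesis H2 : forall k, computes Psi (PsiOr k) (Wt k).
Hypothesis H30 : Rt 0 = tf X.
Hypothesis H3S : forall k, Rt (S k) = right_part (Wt k).
Hypothesis HOWs : forall c k tS n b, (forall y b', Otab tS c y = Some b' -> St k y = b') -> OW X c k tS n = Some b -> PsiOr k n = b.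
Hypothesis HOWc : forall c k tS n, (forall y, y <= n -> Otab tS c y = Some (St k y)) -> OW X c k tS n = Some (PsiOr k n).

Lemma PsiNew_computes : computes PsiNew X (fun n => Wt (fst (of_nat n)) (2 * snd (of_nat n))).
Proof.
  intros n. set (i := fst (of_nat n)). set (x := snd (of_nat n)).
  destruct (ans_complete Phi Phi_total Theta Psi tf OW X Rt St Wt PsiOr H1 H2 H30 H3S HOWc i x) as [c0 Hc0].
  destruct (least_ex (fun c => ans Phi Phi_total Theta Psi tf OW X c i x <> 0) c0) as [c [Pc Hl]].
  { apply Hc0; lia. }
  assert (E : eval SRCH X [i; x] c).
  { constructor.
    - eapply eval_eq. ev. simpl.
      destruct (ans Phi Phi_total Theta Psi tf OW X c i x); [congruence|reflexivity].
    - intros m Hm. exists 0. eapply eval_eq. ev. simpl.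
      specialize (Hl m Hm). destruct (ans Phi Phi_total Theta Psi tf OW X m i x); [reflexivity|]. exfalso; apply Hl; discriminate. }
  unfold PsiNew. eapply eval_eq. eapply ev_comp. constructor. eapply ev_comp. constructor.
  eapply ev_comp. constructor. apply fstN_ev. constructor. apply sndN_ev. constructor. exact E.
  constructor. apply fstN_ev. constructor. apply sndN_ev. constructor.
  apply (ans_ev Phi Phi_total Theta Psi tr tf Htr qW OW HqW). constructor. apply pred_ev.
  fold i x. rewrite (ans_sound Phi Phi_total Theta Psi tf OW X Rt St Wt PsiOr H1 H2 H30 H3S HOWs c i x Pc). reflexivity.
Qed.
End Out.

Section Chain.
Variables P Q : problem.
Hypothesis HtotP : total P.
Hypothesis HtotQ : total Q.
Variable Phi : prog.
Hypothesis Phi_total : forall Z, exists B, computes Phi Z B.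
Variable Theta : prog.
Hypothesis HTh : forall B1 B2 m, instance P B1 -> instance P B2 -> (forall x, m <= x -> B1 x = B2 x) ->
  forall S1, solution P B1 S1 -> exists S2, computes2 Theta S1 m S2 /\ solution P B2 S2.
Variables Z T : cset.
Definition CC k := Cfun Phi Phi_total Z k.
Definition Zk k := join (column Z k) (CC (S k)).
Variable Rel : nat -> cset -> cset -> Prop.
Hypothesis HRel : forall k B S, computes Phi (Zk k) B -> solution P B S -> exists W, Rel k S W /\ solution (parallel Q P) (Zk k) W.
Hypothesis HT : solution P (CC 0) T.

Definition Bk k := pick (fun B => computes Phi (Zk k) B).
Definition Spick k R := pick (fun S => computes2 Theta R (mj Phi Phi_total k) S /\ solution P (Bk k) S).
Definition Wpick k S := pick (fun W => Rel k S W /\ solution (parallel Q P) (Zk k) W).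
Definition Rt k := nat_rect (fun _ => cset) T (fun k R => right_part (Wpick k (Spick k R))) k.
Definition Stt k := Spick k (Rt k).
Definition Wtt k := Wpick k (Stt k).

Lemma Bk_spec k : computes Phi (Zk k) (Bk k).
Proof. unfold Bk. apply pick_spec. apply Phi_total. Qed.

Lemma step_facts k R : solution P (CC k) R ->
  (computes2 Theta R (mj Phi Phi_total k) (Spick k R) /\ solution P (Bk k) (Spick k R)) /\
  (Rel k (Spick k R) (Wpick k (Spick k R)) /\ solution (parallel Q P) (Zk k) (Wpick k (Spick k R))).
Proof.
  intros HR. assert (A : computes2 Theta R (mj Phi Phi_total k) (Spick k R) /\ solution P (Bk k) (Spick k R)).
  { unfold Spick. apply pick_spec. apply HTh with (B1 := CC k); auto. intros x Hx. unfold CC. apply Cfun_high; auto. apply Bk_spec. }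
  split; auto. unfold Wpick. apply pick_spec. eapply HRel. apply Bk_spec. apply A.
Qed.

Lemma Rt_sol k : solution P (CC k) (Rt k).
Proof.
  induction k; simpl; auto. destruct (step_facts k _ IHk) as [_ [_ [_ B]]].
  unfold Zk in B. rewrite right_join in B. exact B.
Qed.

Lemma chain_props :
  Rt 0 = T /\ (forall k, Rt (S k) = right_part (Wtt k)) /\
  (forall k, computes2 Theta (Rt k) (mj Phi Phi_total k) (Stt k)) /\
  (forall k, Rel k (Stt k) (Wtt k)) /\ (forall k, solution Q (column Z k) (left_part (Wtt k))).
Proof.
  split; [reflexivity|]. split; [reflexivity|].
  split; [intros k; apply (step_facts k _ (Rt_sol k))|].
  split; [intros k; apply (step_facts k _ (Rt_sol k))|].
  intros k. destruct (step_facts k _ (Rt_sol k)) as [_ [_ [B _]]]. unfold Zk in B. rewrite left_join in B. exact B.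
Qed.
End Chain.

Definition PhiNew (Phi : prog) := PComp (CP Phi POracle) [PZero; PProj 0].

Lemma PhiNew_computes Phi (Phi_total : forall Z, exists B, computes Phi Z B) A :
  computes (PhiNew Phi) A (Cfun Phi Phi_total A 0).
Proof.
  intros n. unfold PhiNew. eapply ev_comp. evl.
  apply (C_ev Phi Phi_total POracle (fun X => X) (fun X m => ev_oracle X [m]) A 0 n).
Qed.

Definition qWs := PComp ifzP [PComp ltP [PProj 3; PProj 0]; PZero; PComp digitP [PProj 2; constP 3; PProj 3]].
Lemma qWs_ev X c k tS n : eval qWs X [c; k; tS; n] (ocode (Otab tS c n)).
Proof.
  eapply eval_eq. unfold qWs. ev. simpl. unfold Otab. destruct (n <? c); simpl; auto.
  rewrite ocode_dec3; auto. apply digit_lt; lia.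
Qed.

Definition zrw := PComp POracle [PComp mulP [constP 2; PProj 0]].
Definition zfw (X : cset) (m : nat) := X (2 * m).
Lemma zrw_ev X m : eval zrw X [m] (b2n (zfw X m)).
Proof. eapply eval_eq. unfold zrw. ev. reflexivity. Qed.
Definition trw := PComp POracle [PComp PSucc [PComp mulP [constP 2; PProj 0]]].
Definition tfw (X : cset) (m : nat) := X (S (2 * m)).
Lemma trw_ev X m : eval trw X [m] (b2n (tfw X m)).
Proof. eapply eval_eq. unfold trw. ev. reflexivity. Qed.

Lemma zfw_join A T : zfw (join A T) = A.
Proof. extensionality m. unfold zfw, join. rewrite Nat.even_even, Nat.div2_double. reflexivity. Qed.
Lemma tfw_join A T : tfw (join A T) = T.
Proof. extensionality m. unfold tfw, join. replace (S (2 * m)) with (2 * m + 1) by lia.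
  rewrite Nat.even_odd, Nat.div2_odd'. reflexivity. Qed.

Section Weak.
Variable Phi : prog.
Hypothesis Phi_total : forall Z, exists B, computes Phi Z B.
Definition qWw := PComp ifzP [PComp evenP [PProj 3];
     PComp ifzP [PComp ltP [PComp div2P [PProj 3]; PProj 0]; PZero; PComp digitP [PProj 2; constP 3; PComp div2P [PProj 3]]];
     PComp PSucc [PComp ifzP [PComp evenP [PComp div2P [PProj 3]];
          PComp (CP Phi zrw) [PComp PSucc [PProj 1]; PComp div2P [PComp div2P [PProj 3]]];
          PComp zrw [PComp tonatP [PProj 1; PComp div2P [PComp div2P [PProj 3]]]]]]].
Definition OWw (X : cset) (c k tS n : nat) : option bool :=
  if Nat.even n then Some (join (column (zfw X) k) (Cfun Phi Phi_total (zfw X) (S k)) (Nat.div2 n)) else Otab tS c (Nat.div2 n).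
Lemma Cw_ev X k y : eval (CP Phi zrw) X [k; y] (b2n (Cfun Phi Phi_total (zfw X) k y)).
Proof. apply (C_ev Phi Phi_total zrw zfw zrw_ev). Qed.
Hint Resolve Cw_ev zrw_ev : evdb.
Lemma qWw_ev X c k tS n : eval qWw X [c; k; tS; n] (ocode (OWw X c k tS n)).
Proof.
  eapply eval_eq. unfold qWw. ev. simpl. unfold OWw.
  destruct (Nat.even n); simpl.
  - unfold join, column. destruct (Nat.even (Nat.div2 n)); reflexivity.
  - unfold Otab. destruct (Nat.div2 n <? c); simpl; auto. rewrite ocode_dec3; auto. apply digit_lt; lia.
Qed.
End Weak.

Theorem theorem2p5 (P Q : problem) :
  total P -> total Q -> finite_tolerance P ->
  (strong_weihrauch_le (parallel Q P) P -> strong_weihrauch_le (omega_power Q) P) /\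
  (weihrauch_le (parallel Q P) P -> weihrauch_le (omega_power Q) P).
Proof.
  intros HP HQ [Theta HTh]. split.
  - intros [Phi [Psi Hred]].
    assert (Phi_total : forall Z, exists B, computes Phi Z B).
    { intros Z. destruct (Hred Z) as [[B [HB _]] _]. split; [apply HQ|apply HP]. eauto. }
    exists (PhiNew Phi), (PsiNew Phi Theta Psi POracle qWs). intros A _. split.
    { exists (Cfun Phi Phi_total A 0). split; [apply PhiNew_computes|apply HP]. }
    intros B HB T HT.
    rewrite (computes_unique _ _ _ _ HB (PhiNew_computes Phi Phi_total A)) in HT.
    set (Rel := fun (k : nat) (S W : cset) => computes Psi S W).
    assert (HRel : forall k B S, computes Phi (Zk Phi Phi_total A k) B -> solution P B S ->
                     exists W, Rel k S W /\ solution (parallel Q P) (Zk Phi Phi_total A k) W).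
    { intros k B' S HB' HS. destruct (Hred (Zk Phi Phi_total A k)) as [_ H]. split; [apply HQ|apply HP].
      apply (H B' HB' S HS). }
    destruct (chain_props P Q HP Phi Phi_total Theta HTh A T Rel HRel HT) as [E0 [ES [C1 [C2 C3]]]].
    set (Wt := Wtt P Q Phi Phi_total Theta A T Rel).
    exists (fun n => Wt (fst (of_nat n)) (2 * snd (of_nat n))). split.
    + apply (PsiNew_computes Phi Phi_total Theta Psi POracle (fun X => X) (fun X m => ev_oracle X [m])
               qWs (fun X c k tS n => Otab tS c n) qWs_ev T
               (Rt P Q Phi Phi_total Theta A T Rel) (Stt P Q Phi Phi_total Theta A T Rel) Wt
               (Stt P Q Phi Phi_total Theta A T Rel) C1 C2 E0 ES).
      * intros c k tS n b Hs Hn. apply Hs; auto.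
      * intros c k tS n Hc. apply Hc; auto.
    + intros i. replace (column (fun n => Wt (fst (of_nat n)) (2 * snd (of_nat n))) i) with (left_part (Wt i)).
      apply C3. extensionality x. unfold column, left_part. rewrite cancel_of_to. reflexivity.
  - intros [Phi [Psi Hred]].
    assert (Phi_total : forall Z, exists B, computes Phi Z B).
    { intros Z. destruct (Hred Z) as [[B [HB _]] _]. split; [apply HQ|apply HP]. eauto. }
    exists (PhiNew Phi), (PsiNew Phi Theta Psi trw (qWw Phi)). intros A _. split.
    { exists (Cfun Phi Phi_total A 0). split; [apply PhiNew_computes|apply HP]. }
    intros B HB T HT.
    rewrite (computes_unique _ _ _ _ HB (PhiNew_computes Phi Phi_total A)) in HT.
    set (Rel := fun (k : nat) (S W : cset) => computes Psi (join (Zk Phi Phi_total A k) S) W).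
    assert (HRel : forall k B S, computes Phi (Zk Phi Phi_total A k) B -> solution P B S ->
                     exists W, Rel k S W /\ solution (parallel Q P) (Zk Phi Phi_total A k) W).
    { intros k B' S HB' HS. destruct (Hred (Zk Phi Phi_total A k)) as [_ H]. split; [apply HQ|apply HP].
      apply (H B' HB' S HS). }
    destruct (chain_props P Q HP Phi Phi_total Theta HTh A T Rel HRel HT) as [E0 [ES [C1 [C2 C3]]]].
    set (Wt := Wtt P Q Phi Phi_total Theta A T Rel).
    set (St := Stt P Q Phi Phi_total Theta A T Rel).
    exists (fun n => Wt (fst (of_nat n)) (2 * snd (of_nat n))). split.
    + apply (PsiNew_computes Phi Phi_total Theta Psi trw tfw trw_ev
               (qWw Phi) (OWw Phi Phi_total) (qWw_ev Phi Phi_total) (join A T)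
               (Rt P Q Phi Phi_total Theta A T Rel) St Wt
               (fun k => join (Zk Phi Phi_total A k) (St k)) C1 C2).
      * rewrite E0, tfw_join. reflexivity.
      * exact ES.
      * intros c k tS n b Hs Hn. unfold OWw in Hn. rewrite zfw_join in Hn. unfold join at 1.
        destruct (Nat.even n).
        -- injection Hn; intros; subst. reflexivity.
        -- apply Hs; auto.
      * intros c k tS n Hc. unfold OWw. rewrite zfw_join. unfold join at 2.
        destruct (Nat.even n).
        -- reflexivity.
        -- apply Hc. apply div2_le.
    + intros i. replace (column (fun n => Wt (fst (of_nat n)) (2 * snd (of_nat n))) i) with (left_part (Wt i)).
      apply C3. extensionality x. unfold column, left_part. rewrite cancel_of_to. reflexivity.
Qed.
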